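(* Let $\mathcal{L}_{9}\subset\mathbb{P}^2_{\mathbb{C}}$ be the line arrangement defined by $$y(y-z)(y+z)(y-x)(y+x)(y-x-2z)(y-x+2z)(y+x-2z)(y+x+2z)=0,$$ and let $\mathcal{L}_{9}'\subset\mathbb{P}^2_{\mathbb{C}}$ be the line arrangement defined by $$xyz(x+y)(x+z)(y-z)(x+y+ez)(x-ey+z)(x-ey+ez)=0,$$ where $e\in\mathbb{C}$ satisfies $e^{2}+1=0$. Then $\mathcal{L}_{9}$ and $\mathcal{L}_{9}'$ form a weak Ziegler pair.
   Context: For a reduced curve $C: f=0$ in $\mathbb{P}^2_{\mathbb{C}}$, ${\rm mdr}(f)$ is the minimal degree $r$ of a nonzero triple $(a,b,c)$ of homogeneous polynomials of degree $r$ in $\mathbb{C}[x,y,z]$ with $a\,\partial_x f+b\,\partial_y f+c\,\partial_z f=0$. For a line arrangement, $n_i$ is the number of points where exactly $i$ lines meet, and the weak-combinatorics is $(d;n_2,\dots,n_m)$ with $d$ the number of lines and $m$ the maximal multiplicity. Two reduced plane curves $C_1,C_2$ with all irreducible components smooth form a weak Ziegler pair if they have the same weak-combinatorics but ${\rm mdr}(C_1)\neq{\rm mdr}(C_2)$. *)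

(* Defs.v *)
From HB Require Import structures.
From mathcomp Require Import all_boot all_order all_algebra all_field.
From mathcomp Require Import mpoly.
Set Implicit Arguments. Unset Strict Implicit. Unset Printing Implicit Defensive.
Import GRing.Theory Num.Theory.
Local Open Scope ring_scope.

(* Ground field: algC (algebraically closed, char 0), a model of C. *)
(* A line  a x + b y + c z = 0  of P^2 is given by its coefficient triple (a,b,c);
   a point of P^2 is represented by a nonzero triple of homogeneous coordinates. *)
Definition vec3 := (algC * algC * algC)%type.

Definition dot3 (l v : vec3) : algC :=
  l.1.1 * v.1.1 + l.1.2 * v.1.2 + l.2 * v.2.

Definition nonzero3 (v : vec3) : Prop := v <> (0, 0, 0).

Definition proportional3 (v w : vec3) : Prop :=
  exists k : algC, k != 0 /\ v = (k * w.1.1, k * w.1.2, k * w.2).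

Definition arrangement := seq vec3.

Definition reduced_arr (L : arrangement) : Prop :=
  (forall i, (i < size L)%N -> nonzero3 (nth (0,0,0) L i)) /\
  (forall i j, (i < size L)%N -> (j < size L)%N -> i <> j ->
     ~ proportional3 (nth (0,0,0) L i) (nth (0,0,0) L j)).

Definition mult_at (L : arrangement) (v : vec3) : nat :=
  count (fun l => dot3 l v == 0) L.

(* "the set of points of P^2 satisfying P has exactly n elements":
   a list of n pairwise non-proportional nonzero representatives of points
   satisfying P, such that every point satisfying P is represented. *)
Definition card_P2 (P : vec3 -> Prop) (n : nat) : Prop :=
  exists s : seq vec3,
    [/\ size s = n,
        forall i, (i < n)%N -> nonzero3 (nth (0,0,0) s i) /\ P (nth (0,0,0) s i),
        forall i j, (i < n)%N -> (j < n)%N -> i <> j ->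
          ~ proportional3 (nth (0,0,0) s i) (nth (0,0,0) s j)
      & forall v, nonzero3 v -> P v -> exists2 i, (i < n)%N & proportional3 v (nth (0,0,0) s i)].

Definition n_pts (L : arrangement) (i n : nat) : Prop :=
  card_P2 (fun v => mult_at L v = i) n.

(* equal weak combinatorics (d; n_2, ..., n_m): same number of lines and the
   same n_i for every i >= 2 (n_i = 0 for i > m). *)
Definition same_weak_comb (L1 L2 : arrangement) : Prop :=
  size L1 = size L2 /\
  forall i, (2 <= i)%N -> forall n, n_pts L1 i n <-> n_pts L2 i n.

Definition lin_form (l : vec3) : {mpoly algC[3]} :=
  l.1.1 *: 'X_(0 : 'I_3) + l.1.2 *: 'X_(1 : 'I_3) + l.2 *: 'X_(2 : 'I_3).

Definition arr_poly (L : arrangement) : {mpoly algC[3]} :=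
  \prod_(l <- L) lin_form l.

Definition jac_syzygy (f : {mpoly algC[3]}) (r : nat) : Prop :=
  exists a b c : {mpoly algC[3]},
    [/\ a \is r.-homog, b \is r.-homog, c \is r.-homog,
        ~ (a = 0 /\ b = 0 /\ c = 0)
      & a * mderiv (0 : 'I_3) f + b * mderiv (1 : 'I_3) f + c * mderiv (2 : 'I_3) f = 0].

Definition is_mdr (f : {mpoly algC[3]}) (r : nat) : Prop :=
  jac_syzygy f r /\ forall r', (r' < r)%N -> ~ jac_syzygy f r'.

(* weak Ziegler pair of line arrangements (lines are smooth components) *)
Definition weak_Ziegler_pair (L1 L2 : arrangement) : Prop :=
  [/\ reduced_arr L1, reduced_arr L2, same_weak_comb L1 L2 &
      exists r1 r2, [/\ is_mdr (arr_poly L1) r1, is_mdr (arr_poly L2) r2 & r1 <> r2]].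

Definition L9 : arrangement :=
  [:: (0, 1, 0); (0, 1, -1); (0, 1, 1); (-1, 1, 0); (1, 1, 0);
      (-1, 1, -2); (-1, 1, 2); (1, 1, -2); (1, 1, 2)].

Definition L9' (e : algC) : arrangement :=
  [:: (1, 0, 0); (0, 1, 0); (0, 0, 1); (1, 1, 0); (1, 0, 1); (0, 1, -1);
      (1, 1, e); (1, -e, 1); (1, -e, e)].

(* Main.v *)
Require Import Defs.
From mathcomp Require Import all_boot all_order all_algebra all_field.
From mathcomp Require Import mpoly.
From Stdlib Require Import ZArith Lia.
From mathcomp Require Import ring lra.
From Stdlib Require Import ClassicalEpsilon.
From mathcomp Require Import ssrZ.
Import ssrZ.Instances.
Set Implicit Arguments. Unset Strict Implicit. Unset Printing Implicit Defensive.
Import GRing.Theory Num.Theory.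
Local Open Scope ring_scope.

Definition Zr (z : Z) : algC := (int_of_Z z)%:~R.

Lemma ZrD x y : Zr (x + y)%Z = Zr x + Zr y.
Proof. by rewrite /Zr -intrD; congr (_%:~R); exact: (rmorphD int_of_Z x y). Qed.
Lemma ZrM x y : Zr (x * y)%Z = Zr x * Zr y.
Proof. by rewrite /Zr -intrM; congr (_%:~R); exact: (rmorphM int_of_Z x y). Qed.
Lemma ZrN x : Zr (- x)%Z = - Zr x.
Proof. by rewrite /Zr -intrN; congr (_%:~R); exact: (rmorphN int_of_Z x). Qed.
Lemma ZrB x y : Zr (x - y)%Z = Zr x - Zr y.
Proof. by rewrite -Z.add_opp_r ZrD ZrN. Qed.
Lemma Zr0 : Zr 0%Z = 0. Proof. by []. Qed.
Lemma Zr1 : Zr 1%Z = 1. Proof. by []. Qed.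
Lemma Zr_eq0 x : (Zr x == 0) = (x =? 0)%Z.
Proof.
rewrite /Zr intr_eq0; apply/eqP/idP => [h|/Z.eqb_eq ->//].
by apply/Z.eqb_eq; rewrite -(int_of_ZK x) h.
Qed.
Lemma Zr_nat n : Zr (Z.of_nat n) = n%:R.
Proof.
rewrite /Zr; have -> : int_of_Z (Z.of_nat n) = n%:Z.
  by rewrite -[n%:Z]Z_of_intK.
by [].
Qed.

Definition ZI := (Z * Z)%type.
Definition zadd (x y : ZI) : ZI := (x.1 + y.1, x.2 + y.2)%Z.
Definition zmul (x y : ZI) : ZI := (x.1 * y.1 - x.2 * y.2, x.1 * y.2 + x.2 * y.1)%Z.
Definition zopp (x : ZI) : ZI := (- x.1, - x.2)%Z.
Definition z0 : ZI := (0, 0)%Z.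
Definition z1 : ZI := (1, 0)%Z.
Definition zeqb (x y : ZI) : bool := (x.1 =? y.1)%Z && (x.2 =? y.2)%Z.
Definition zis0 (x : ZI) : bool := (x.1 =? 0)%Z && (x.2 =? 0)%Z.

Definition phi (e : algC) (x : ZI) : algC := Zr x.1 + Zr x.2 * e.

Lemma phiD e x y : phi e (zadd x y) = phi e x + phi e y.
Proof. rewrite /phi /zadd /= !ZrD; ring. Qed.
Lemma phiN e x : phi e (zopp x) = - phi e x.
Proof. rewrite /phi /zopp /= !ZrN; ring. Qed.
Lemma phiM e (he : e ^+ 2 + 1 = 0) x y : phi e (zmul x y) = phi e x * phi e y.
Proof.
rewrite /phi /zmul /= ZrB ZrD !ZrM.
have E : e * e = -1 by rewrite -expr2; move/eqP: he; rewrite addr_eq0 => /eqP.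
transitivity (Zr x.1 * Zr y.1 + (Zr x.1 * Zr y.2 + Zr x.2 * Zr y.1) * e + Zr x.2 * Zr y.2 * (e * e)).
  by rewrite E; ring.
ring.
Qed.
Lemma phi0 e : phi e z0 = 0. Proof. by rewrite /phi /= mul0r addr0. Qed.
Lemma phi1 e : phi e z1 = 1. Proof. by rewrite /phi /= mul0r addr0. Qed.

Lemma phi_eq0 e (he : e ^+ 2 + 1 = 0) x : (phi e x == 0) = zis0 x.
Proof.
rewrite /phi /zis0; apply/eqP/idP => [h|/andP[/Z.eqb_eq -> /Z.eqb_eq ->]]; last first.
  by rewrite !Zr0 mul0r addr0.
have h2 : Zr x.1 * Zr x.1 + Zr x.2 * Zr x.2 = 0.
  have -> : Zr x.1 = - (Zr x.2 * e) by apply/eqP; rewrite -addr_eq0 h.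
  have E : e * e = -1 by rewrite -expr2; move/eqP: he; rewrite addr_eq0 => /eqP.
  transitivity (Zr x.2 * Zr x.2 * (e * e + 1)); first ring.
  by rewrite E addNr mulr0.
have : Zr (x.1 * x.1 + x.2 * x.2)%Z == 0 by rewrite ZrD !ZrM h2.
rewrite Zr_eq0 => /Z.eqb_eq H.
have H1 : (x.1 = 0)%Z by nia.
have H2 : (x.2 = 0)%Z by nia.
by rewrite H1 H2.
Qed.


Definition Mono := (nat * nat * nat)%type.
Definition mget (m : Mono) (i : nat) : nat := nth 0%nat [:: m.1.1; m.1.2; m.2] i.
Definition mono_of (m : Mono) : 'X_{1..3} := [multinom (mget m i) | i < 3].
Definition monoX (m : Mono) : {mpoly algC[3]} := 'X_[mono_of m].
Definition madd (m m' : Mono) : Mono := (m.1.1 + m'.1.1, m.1.2 + m'.1.2, m.2 + m'.2)%nat.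
Definition mdec (i : nat) (m : Mono) : Mono :=
  (m.1.1 - (i == 0%nat), m.1.2 - (i == 1%nat), m.2 - (i == 2%nat))%nat.
Definition msum (m : Mono) : nat := (m.1.1 + m.1.2 + m.2)%nat.

Lemma mono_ofE m i : mono_of m i = mget m i.
Proof. by rewrite /mono_of mnmE. Qed.

Lemma ord3P (P : 'I_3 -> Prop) : P 0 -> P 1 -> P 2%:R -> forall i, P i.
Proof.
move=> h0 h1 h2 [[|[|[|i]]] Hi] //.
- by have -> : Ordinal Hi = 0 by apply/val_inj.
- by have -> : Ordinal Hi = 1 by apply/val_inj.
- by have -> : Ordinal Hi = 2%:R by apply/val_inj.
Qed.

Lemma mono_of_inj : injective mono_of.
Proof.
move=> [[a b] c] [[a' b'] c'] /mnmP h.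
have := h 0; have := h 1; have := h 2%:R; rewrite !mono_ofE /mget /=.
by move=> -> -> ->.
Qed.

Lemma mono_of_surj (k : 'X_{1..3}) : k = mono_of (k 0, k 1, k 2%:R).
Proof.
by apply/mnmP; apply: ord3P; rewrite mono_ofE.
Qed.

Lemma mono_of_add m m' : mono_of (madd m m') = (mono_of m + mono_of m')%MM.
Proof. by apply/mnmP; apply: ord3P; rewrite mnmDE !mono_ofE. Qed.

Lemma mono_of_dec (i : 'I_3) m : mono_of (mdec i m) = (mono_of m - U_(i))%MM.
Proof.
apply/mnmP => j; rewrite mnmBE mnm1E !mono_ofE.
by move: i j; apply: ord3P; apply: ord3P.
Qed.

Lemma mdeg_mono_of m : mdeg (mono_of m) = msum m.
Proof.
by rewrite mdegE !big_ord_recl big_ord0 !mono_ofE /msum /mget /= addn0 addnA.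
Qed.

Lemma monoX_add m m' : monoX (madd m m') = monoX m * monoX m'.
Proof. by rewrite /monoX mono_of_add mpolyXD. Qed.

Lemma monoX0 : monoX (0, 0, 0)%nat = 1.
Proof.
rewrite /monoX; have -> : mono_of (0, 0, 0)%nat = 0%MM.
  by apply/mnmP; apply: ord3P; rewrite mono_ofE mnm0E.
by rewrite mpolyX0.
Qed.

Lemma monoX_U0 : monoX (1, 0, 0)%nat = 'X_0.
Proof. by rewrite /monoX; congr mpolyX; apply/mnmP; apply: ord3P; rewrite mono_ofE mnm1E. Qed.
Lemma monoX_U1 : monoX (0, 1, 0)%nat = 'X_1.
Proof. by rewrite /monoX; congr mpolyX; apply/mnmP; apply: ord3P; rewrite mono_ofE mnm1E. Qed.
Lemma monoX_U2 : monoX (0, 0, 1)%nat = 'X_(2%:R).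
Proof. by rewrite /monoX; congr mpolyX; apply/mnmP; apply: ord3P; rewrite mono_ofE mnm1E. Qed.


Definition CPoly := seq (Mono * ZI).
Definition interp (e : algC) (p : CPoly) : {mpoly algC[3]} :=
  \sum_(x <- p) phi e x.2 *: monoX x.1.
Definition coefZ (p : CPoly) (n : Mono) : ZI :=
  foldr (fun x acc => if x.1 == n then zadd x.2 acc else acc) z0 p.

Lemma interp_coef e p n : (interp e p)@_(mono_of n) = phi e (coefZ p n).
Proof.
elim: p => [|x p IH]; first by rewrite /interp big_nil mcoeff0 phi0.
rewrite /interp big_cons mcoeffD mcoeffZ /monoX mcoeffX -/(interp e p) IH /=.
rewrite (eqtype.inj_eq mono_of_inj); case: eqP => _; first by rewrite mulr1 phiD.
by rewrite mulr0 add0r.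
Qed.

Lemma coefZ_notin p n : n \notin map fst p -> coefZ p n = z0.
Proof.
elim: p => [//|x p IH] /=; rewrite in_cons negb_or => /andP[h1 h2].
by rewrite eq_sym (negbTE h1) IH.
Qed.

Lemma interp_ext e p q : (forall n, phi e (coefZ p n) = phi e (coefZ q n)) ->
  interp e p = interp e q.
Proof.
move=> h; apply/mpolyP => k; rewrite (mono_of_surj k) !interp_coef; exact: h.
Qed.

Lemma interp_eq0 e (he : e ^+ 2 + 1 = 0) p :
  all (fun x => zis0 (coefZ p x.1)) p -> interp e p = 0.
Proof.
move=> /allP h; apply/mpolyP => k; rewrite mcoeff0 (mono_of_surj k) interp_coef.
set n := (_, _, _).
case: (boolP (n \in map fst p)) => [/mapP[x xp ->]|/coefZ_notin ->]; last exact: phi0.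
by apply/eqP; rewrite phi_eq0 // h.
Qed.

Definition pmul (p q : CPoly) : CPoly :=
  [seq (madd x.1 y.1, zmul x.2 y.2) | x <- p, y <- q].

Lemma interp_mul e (he : e ^+ 2 + 1 = 0) p q :
  interp e (pmul p q) = interp e p * interp e q.
Proof.
rewrite /interp /pmul big_allpairs_dep mulr_suml; apply: eq_bigr => x _.
rewrite mulr_sumr; apply: eq_bigr => y _ /=.
by rewrite phiM // monoX_add -scalerAl -scalerAr scalerA.
Qed.

Lemma interp_cat e p q : interp e (p ++ q) = interp e p + interp e q.
Proof. by rewrite /interp big_cat. Qed.

Definition pnorm (p : CPoly) : CPoly := [seq (n, coefZ p n) | n <- undup (map fst p)].

Lemma fst_map_pair (f : Mono -> ZI) s : map fst [seq (k, f k) | k <- s] = s.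
Proof. by elim: s => //= ? ? ->. Qed.

Lemma coefZ_map_uniq e (f : Mono -> ZI) s n : uniq s ->
  phi e (coefZ [seq (k, f k) | k <- s] n) = if n \in s then phi e (f n) else 0.
Proof.
elim: s => [|k s IH] /=; first by rewrite phi0.
move=> /andP[ks us]; rewrite in_cons.
case: (eqVneq k n) => [<-|kn].
  by rewrite /= phiD coefZ_notin ?fst_map_pair // phi0 addr0.
exact: IH.
Qed.

Lemma coefZ_pnorm e p n : phi e (coefZ (pnorm p) n) = phi e (coefZ p n).
Proof.
rewrite /pnorm coefZ_map_uniq ?undup_uniq // mem_undup.
by case: ifP => // /negbT /coefZ_notin ->; rewrite phi0.
Qed.

Lemma interp_pnorm e p : interp e (pnorm p) = interp e p.
Proof. by apply: interp_ext => n; rewrite coefZ_pnorm. Qed.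


Definition pderiv (i : 'I_3) (p : CPoly) : CPoly :=
  [seq (mdec i x.1, zmul (Z.of_nat (mget x.1 i), 0%Z) x.2) | x <- p].

Lemma mderiv_monoX (i : 'I_3) m : mderiv i (monoX m) = (mget m i)%:R *: monoX (mdec i m).
Proof. by rewrite /monoX mderivX mono_ofE mono_of_dec. Qed.

Lemma phi_nat e k : phi e (Z.of_nat k, 0%Z) = k%:R.
Proof. by rewrite /phi /= Zr_nat Zr0 mul0r addr0. Qed.

Lemma interp_deriv e (he : e ^+ 2 + 1 = 0) i p :
  mderiv i (interp e p) = interp e (pderiv i p).
Proof.
elim: p => [|x p IH]; first by rewrite /interp !big_nil mderiv0.
rewrite /interp !big_cons mderivD mderivZ -/(interp e p) IH mderiv_monoX.
by rewrite /= phiM // phi_nat scalerA mulrC.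
Qed.

Definition linZ (l : ZI * ZI * ZI) : CPoly :=
  [:: ((1, 0, 0)%nat, l.1.1); ((0, 1, 0)%nat, l.1.2); ((0, 0, 1)%nat, l.2)].

Definition phi3 e (l : ZI * ZI * ZI) : vec3 := (phi e l.1.1, phi e l.1.2, phi e l.2).

Lemma interp_lin e l : interp e (linZ l) = lin_form (phi3 e l).
Proof.
by rewrite /interp /linZ !big_cons big_nil addr0 monoX_U0 monoX_U1 monoX_U2 addrA.
Qed.

Definition pone : CPoly := [:: ((0, 0, 0)%nat, z1)].
Lemma interp_one e : interp e pone = 1.
Proof. by rewrite /interp big_cons big_nil addr0 phi1 scale1r monoX0. Qed.

Definition prodZ (LZ : seq (ZI * ZI * ZI)) : CPoly :=
  foldr (fun l acc => pnorm (pmul (linZ l) acc)) pone LZ.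

Lemma interp_prod e (he : e ^+ 2 + 1 = 0) LZ :
  interp e (prodZ LZ) = arr_poly (map (phi3 e) LZ).
Proof.
rewrite /arr_poly big_map; elim: LZ => [|l LZ IH] /=.
  by rewrite big_nil interp_one.
by rewrite big_cons interp_pnorm interp_mul // IH interp_lin.
Qed.

Definition FZ (LZ : seq (ZI * ZI * ZI)) (i : 'I_3) : CPoly := pnorm (pderiv i (prodZ LZ)).

Lemma interp_FZ e (he : e ^+ 2 + 1 = 0) LZ i :
  mderiv i (arr_poly (map (phi3 e) LZ)) = interp e (FZ LZ i).
Proof. by rewrite /FZ interp_pnorm -interp_deriv // interp_prod. Qed.

Lemma interp_homog e p d : all (fun x => msum x.1 == d) p -> interp e p \is d.-homog.
Proof.
move=> /allP h; rewrite /interp big_seq; apply: rpred_sum => x /h hx; apply: rpredZ.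
by rewrite /monoX dhomogX; apply/eqP; rewrite -(eqP hx); exact: mdeg_mono_of.
Qed.

Definition monos (d : nat) : seq Mono :=
  [seq t <- [seq (ij, k) | ij <- [seq (i, j) | i <- iota 0 d.+1, j <- iota 0 d.+1],
                          k <- iota 0 d.+1] | msum t == d].

Lemma mem_monos d t : (t \in monos d) = (msum t == d).
Proof.
rewrite mem_filter; case: eqP => //= h.
case: t h => [[i j] k]; rewrite /msum /= => h.
have hi : i \in iota 0 d.+1 by rewrite mem_iota; lia.
have hj : j \in iota 0 d.+1 by rewrite mem_iota; lia.
have hk : k \in iota 0 d.+1 by rewrite mem_iota; lia.
have h1 := @allpairs_f _ _ _ (fun a b => (a, b)) _ _ _ _ hi hj.
exact: (@allpairs_f _ _ _ (fun ij k => (ij, k)) _ _ _ _ h1 hk).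
Qed.

Lemma uniq_monos d : uniq (monos d).
Proof.
apply: filter_uniq; apply: allpairs_uniq; last by move=> [? ?] [? ?] _ _.
- apply: allpairs_uniq; last by move=> [? ?] [? ?] _ _.
  + exact: iota_uniq.
  + exact: iota_uniq.
- exact: iota_uniq.
Qed.

Lemma homog_decomp (p : {mpoly algC[3]}) d : p \is d.-homog ->
  p = \sum_(t <- monos d) p@_(mono_of t) *: monoX t.
Proof.
move=> hp; apply/mpolyP => k; rewrite (mono_of_surj k); set n := (_, _, _).
rewrite raddf_sum /=.
under eq_bigr => t _ do rewrite mcoeffZ /monoX mcoeffX (eqtype.inj_eq mono_of_inj).
case: (boolP (n \in monos d)) => hn.
  rewrite (bigD1_seq n) ?uniq_monos //= eqxx mulr1 big1 ?addr0 //.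
  by move=> t /negbTE ->; rewrite mulr0.
rewrite big1_seq; last first.
  by move=> t /andP[_ ht]; case: eqP => [ e|]; [rewrite e (negbTE hn) in ht | rewrite mulr0].
apply: (dhomog_nemf_coeff hp).
by rewrite -[X in X != _]/(mdeg (mono_of n)) mdeg_mono_of -mem_monos.
Qed.


Definition dotW (w : seq ZI) (outs : seq Mono) (q : CPoly) : ZI :=
  foldr (fun x acc => zadd (zmul x.1 (coefZ q x.2)) acc) z0 (zip w outs).

Lemma phi_dotW e (he : e ^+ 2 + 1 = 0) w outs q :
  phi e (dotW w outs q) = \sum_(x <- zip w outs) phi e x.1 * phi e (coefZ q x.2).
Proof.
rewrite /dotW; elim: (zip w outs) => [|x s IH] /=; first by rewrite big_nil phi0.
by rewrite big_cons phiD phiM // IH.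
Qed.

Definition checkW (Qs : seq CPoly) (outs : seq Mono) (W : seq (seq ZI)) : bool :=
  all (fun k => all (fun j => (~~ zis0 (dotW (nth [::] W k) outs (nth [::] Qs j))) == (j == k))
                    (iota 0 (size Qs)))
      (iota 0 (size Qs)).

Lemma cert e (he : e ^+ 2 + 1 = 0) (Z : seq (algC * CPoly)) outs W :
  (forall n, \sum_(j <- Z) j.1 * phi e (coefZ j.2 n) = 0) ->
  checkW (map snd Z) outs W -> forall k, (k < size Z)%nat -> (nth (0, [::]) Z k).1 = 0.
Proof.
move=> H /allP C k hk.
have hk' : k \in iota 0 (size (map snd Z)) by rewrite mem_iota size_map; lia.
have /allP Ck := C k hk'.
set w := nth [::] W k in Ck.
have E2 : \sum_(j <- Z) j.1 * phi e (dotW w outs j.2) = 0.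
  transitivity (\sum_(x <- zip w outs) phi e x.1 * (\sum_(j <- Z) j.1 * phi e (coefZ j.2 x.2))); last first.
    by rewrite big1 // => x _; rewrite H mulr0.
  under eq_bigr => j _ do rewrite phi_dotW // mulr_sumr.
  rewrite exchange_big /=; apply: eq_bigr => x _; rewrite mulr_sumr.
  by apply: eq_bigr => j _; rewrite mulrCA.
rewrite (big_nth (0, [::])) big_mkord (bigD1 (Ordinal hk)) //= big1 ?addr0 in E2.
  move/eqP: E2; rewrite mulf_eq0 => /orP[/eqP //|].
  have := Ck k hk'.
  by rewrite eqxx (nth_map (0, [::])) // eqb_id -(phi_eq0 he) => /negbTE ->.
move=> j /eqP hj.
have hj' : (j : nat) \in iota 0 (size (map snd Z)) by rewrite mem_iota size_map; have := ltn_ord j; lia.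
have := Ck j hj'.
have -> : (j == k :> nat) = false by apply/negP => /eqP hjk; apply: hj; apply: val_inj.
rewrite (nth_map (0, [::])) // eqbF_neg negbK -(phi_eq0 he) => /eqP ->.
by rewrite mulr0.
Qed.


Definition shiftZ (t : Mono) (F : CPoly) : CPoly := pmul [:: (t, z1)] F.

Definition QsZ (LZ : seq (ZI * ZI * ZI)) (r : nat) : seq CPoly :=
  [seq shiftZ t (FZ LZ 0) | t <- monos r] ++ [seq shiftZ t (FZ LZ 1) | t <- monos r] ++
  [seq shiftZ t (FZ LZ 2%:R) | t <- monos r].

Lemma interp_single e t : interp e [:: (t, z1)] = monoX t.
Proof. by rewrite /interp big_cons big_nil addr0 phi1 scale1r. Qed.

Lemma decomp_mul e (he : e ^+ 2 + 1 = 0) (a : {mpoly algC[3]}) r F : a \is r.-homog ->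
  a * interp e F = \sum_(t <- monos r) a@_(mono_of t) *: interp e (shiftZ t F).
Proof.
move=> ha; rewrite {1}(homog_decomp ha) mulr_suml; apply: eq_bigr => t _.
by rewrite /shiftZ interp_mul // interp_single scalerAl.
Qed.

Lemma homog_zero (a : {mpoly algC[3]}) r : a \is r.-homog ->
  all (fun t => a@_(mono_of t) == 0) (monos r) -> a = 0.
Proof.
move=> ha /allP h; rewrite (homog_decomp ha) big1_seq // => t /andP[_ /h /eqP ->].
by rewrite scale0r.
Qed.

Lemma mcoeff_sum_seq (I : Type) (s : seq I) (F : I -> {mpoly algC[3]}) m :
  (\sum_(i <- s) F i)@_m = \sum_(i <- s) (F i)@_m.
Proof.
elim: s => [|x s IH]; first by rewrite !big_nil mcoeff0.
by rewrite !big_cons mcoeffD IH.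
Qed.

Lemma no_syz e (he : e ^+ 2 + 1 = 0) LZ r outs W :
  checkW (QsZ LZ r) outs W -> ~ jac_syzygy (arr_poly (map (phi3 e) LZ)) r.
Proof.
move=> C [a [b [c [ha hb hc nz E]]]].
rewrite !interp_FZ // (decomp_mul he _ ha) (decomp_mul he _ hb) (decomp_mul he _ hc) in E.
set M := monos r in E.
pose Z := [seq (a@_(mono_of t), shiftZ t (FZ LZ 0)) | t <- M] ++
          [seq (b@_(mono_of t), shiftZ t (FZ LZ 1)) | t <- M] ++
          [seq (c@_(mono_of t), shiftZ t (FZ LZ 2%:R)) | t <- M].
have E' : \sum_(j <- Z) j.1 *: interp e j.2 = 0.
  by rewrite /Z !big_cat !big_map /= addrA.
have H : forall n, \sum_(j <- Z) j.1 * phi e (coefZ j.2 n) = 0.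
  move=> n; transitivity ((\sum_(j <- Z) j.1 *: interp e j.2)@_(mono_of n)).
    by rewrite mcoeff_sum_seq; apply: eq_bigr => j _; rewrite mcoeffZ interp_coef.
  by rewrite E' mcoeff0.
have mZ : map snd Z = QsZ LZ r by rewrite /Z !map_cat -!map_comp.
rewrite -mZ in C.
have K := cert he H C.
have hall : all (fun j => j.1 == 0) Z.
  by apply/(all_nthP (0, [::])) => k hk; apply/eqP; exact: K.
move: hall; rewrite /Z !all_cat !all_map => /and3P[h1 h2 h3].
apply: nz; split; [exact: homog_zero ha h1|split; [exact: homog_zero hb h2|exact: homog_zero hc h3]].
Qed.

Lemma yes_syz e (he : e ^+ 2 + 1 = 0) LZ r (A B C : CPoly) :
  all (fun x => msum x.1 == r) A -> all (fun x => msum x.1 == r) B ->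
  all (fun x => msum x.1 == r) C ->
  has (fun x => ~~ zis0 (coefZ A x.1)) A ->
  (let P := pnorm (pmul A (FZ LZ 0) ++ pmul B (FZ LZ 1) ++ pmul C (FZ LZ 2%:R)) in
   all (fun x => zis0 (coefZ P x.1)) P) ->
  jac_syzygy (arr_poly (map (phi3 e) LZ)) r.
Proof.
move=> hA hB hC /hasP[x xA nzx] /= P0.
exists (interp e A), (interp e B), (interp e C); split.
- exact: interp_homog.
- exact: interp_homog.
- exact: interp_homog.
- move=> [A0 _]; move: nzx; rewrite -(phi_eq0 he) -interp_coef A0 mcoeff0 eqxx //.
rewrite !interp_FZ // -!interp_mul // -addrA -!interp_cat -interp_pnorm.
exact: interp_eq0.
Qed.

Lemma syz_up (f : {mpoly algC[3]}) r k : jac_syzygy f r -> jac_syzygy f (r + k).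
Proof.
move=> [a [b [c [ha hb hc nz E]]]].
have hX : ('X_0 : {mpoly algC[3]}) ^+ k \is k.-homog.
  have h1 : ('X_0 : {mpoly algC[3]}) \is 1.-homog by rewrite dhomogX; apply/eqP; exact: mdeg1.
  by have := dhomogMn k h1; rewrite mul1n.
have nX : ('X_0 : {mpoly algC[3]}) ^+ k != 0.
  apply: expf_neq0; apply/eqP => /(congr1 (mcoeff U_(0))).
  by rewrite mcoeffX eqxx mcoeff0 => /eqP; rewrite oner_eq0.
exists (a * 'X_0 ^+ k), (b * 'X_0 ^+ k), (c * 'X_0 ^+ k); split.
- exact: dhomogM.
- exact: dhomogM.
- exact: dhomogM.
- move=> [/eqP A0 [/eqP B0 /eqP C0]]; apply: nz.
  by move: A0 B0 C0; rewrite !mulf_eq0 (negbTE nX) !orbF => /eqP -> /eqP -> /eqP ->.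
transitivity ((a * mderiv 0 f + b * mderiv 1 f + c * mderiv 2%:R f) * 'X_0 ^+ k).
  by ring.
by rewrite E mul0r.
Qed.

Lemma mdr_of (f : {mpoly algC[3]}) r : jac_syzygy f r.+1 -> ~ jac_syzygy f r -> is_mdr f r.+1.
Proof.
move=> h1 h2; split => // r' hr' h; apply: h2.
have -> : r = (r' + (r - r'))%nat by lia.
exact: syz_up.
Qed.


Definition V3 := (ZI * ZI * ZI)%type.
Definition zsub (x y : ZI) : ZI := zadd x (zopp y).
Definition dotZ3 (l v : V3) : ZI :=
  zadd (zadd (zmul l.1.1 v.1.1) (zmul l.1.2 v.1.2)) (zmul l.2 v.2).
Definition crossZ (a b : V3) : V3 :=
  (zsub (zmul a.1.2 b.2) (zmul a.2 b.1.2),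
   zsub (zmul a.2 b.1.1) (zmul a.1.1 b.2),
   zsub (zmul a.1.1 b.1.2) (zmul a.1.2 b.1.1)).
Definition zis03 (v : V3) : bool := [&& zis0 v.1.1, zis0 v.1.2 & zis0 v.2].
Definition multZ (LZ : seq V3) (v : V3) : nat := count (fun l => zis0 (dotZ3 l v)) LZ.

Definition cross3 (a b : vec3) : vec3 :=
  (a.1.2 * b.2 - a.2 * b.1.2, a.2 * b.1.1 - a.1.1 * b.2, a.1.1 * b.1.2 - a.1.2 * b.1.1).

Lemma phiB e x y : phi e (zsub x y) = phi e x - phi e y.
Proof. by rewrite /zsub phiD phiN. Qed.

Lemma dot_phi e (he : e ^+ 2 + 1 = 0) l v : dot3 (phi3 e l) (phi3 e v) = phi e (dotZ3 l v).
Proof. by rewrite /dot3 /dotZ3 /= !phiD !phiM. Qed.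

Lemma cross_phi e (he : e ^+ 2 + 1 = 0) a b : cross3 (phi3 e a) (phi3 e b) = phi3 e (crossZ a b).
Proof. by rewrite /cross3 /crossZ /phi3 /= !phiB !phiM. Qed.

Lemma nonzero_phi e (he : e ^+ 2 + 1 = 0) v : ~~ zis03 v -> nonzero3 (phi3 e v).
Proof.
move=> h [] /eqP a /eqP b /eqP c; move: h; rewrite /zis03.
by rewrite -!(phi_eq0 he) a b c.
Qed.

Lemma mult_phi e (he : e ^+ 2 + 1 = 0) LZ v :
  mult_at (map (phi3 e) LZ) (phi3 e v) = multZ LZ v.
Proof.
rewrite /mult_at /multZ count_map; apply: eq_count => l /=.
by rewrite dot_phi // phi_eq0.
Qed.

Lemma prop_sym v w : proportional3 v w -> proportional3 w v.
Proof.
move=> [k [k0 ->]]; exists k^-1; split; first by rewrite invr_eq0.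
by rewrite !mulrA mulVf // !mul1r; case: w => [[? ?] ?].
Qed.

Lemma prop_trans u v w : proportional3 u v -> proportional3 v w -> proportional3 u w.
Proof.
move=> [k [k0 ->]] [k' [k0' ->]]; exists (k * k'); split; first by rewrite mulf_neq0.
by rewrite /= !mulrA.
Qed.

Lemma prop_mult L v w : proportional3 v w -> mult_at L v = mult_at L w.
Proof.
move=> [k [k0 ->]]; apply: eq_count => l /=.
have -> : dot3 l (k * w.1.1, k * w.1.2, k * w.2) = k * dot3 l w by rewrite /dot3 /=; ring.
by rewrite mulf_eq0 (negbTE k0).
Qed.

Lemma prop_cross0 v w : proportional3 v w -> cross3 v w = (0, 0, 0).
Proof.
move=> [k [_ ->]]; rewrite /cross3 /=; congr (_, _, _); ring.
Qed.

Lemma perp_cross l l' v : dot3 l v = 0 -> dot3 l' v = 0 -> cross3 (cross3 l l') v = (0, 0, 0).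
Proof.
case: l => [[a b] c]; case: l' => [[a' b'] c']; case: v => [[x y] z].
rewrite /dot3 /cross3 /= => h1 h2.
congr (_, _, _).
- transitivity (a' * (a * x + b * y + c * z) - a * (a' * x + b' * y + c' * z) : algC); first ring.
  by rewrite h1 h2; ring.
- transitivity (b' * (a * x + b * y + c * z) - b * (a' * x + b' * y + c' * z) : algC); first ring.
  by rewrite h1 h2; ring.
- transitivity (c' * (a * x + b * y + c * z) - c * (a' * x + b' * y + c' * z) : algC); first ring.
  by rewrite h1 h2; ring.
Qed.

Lemma par_lemma a b : nonzero3 a -> nonzero3 b -> cross3 a b = (0, 0, 0) ->
  proportional3 b a.
Proof.
case: a => [[a1 a2] a3]; case: b => [[b1 b2] b3].
rewrite /nonzero3 /cross3 /= => na nb [/eqP e1 /eqP e2 /eqP e3].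
move: e1 e2 e3; rewrite !subr_eq0 => /eqP e1 /eqP e2 /eqP e3.
have [a1z|a1nz] := eqVneq a1 0.
  have [a2z|a2nz] := eqVneq a2 0.
    have [a3z|a3nz] := eqVneq a3 0; first by case: na; rewrite a1z a2z a3z.
    subst a1 a2.
    have b1z : b1 = 0 by apply/eqP; move: e2; rewrite mul0r => /eqP; rewrite mulf_eq0 (negbTE a3nz).
    have b2z : b2 = 0 by apply/eqP; move: e1; rewrite mul0r => /esym/eqP; rewrite mulf_eq0 (negbTE a3nz).
    subst b1 b2.
    have b3nz : b3 != 0 by apply/eqP => b3z; apply: nb; rewrite b3z.
    exists (b3 / a3); split; first by rewrite mulf_neq0 ?invr_eq0.
    by rewrite !mulr0 divfK.
  subst a1.
  have b1z : b1 = 0 by apply/eqP; move: e3; rewrite mul0r => /esym/eqP; rewrite mulf_eq0 (negbTE a2nz).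
  subst b1.
  have b2nz : b2 != 0.
    apply/eqP => b2z; apply: nb; rewrite b2z; congr (_, _, _).
    by apply/eqP; move: e1; rewrite b2z mulr0 => /eqP; rewrite mulf_eq0 (negbTE a2nz).
  exists (b2 / a2); split; first by rewrite mulf_neq0 ?invr_eq0.
  rewrite mulr0 divfK //; congr (_, _, _).
  by rewrite /= -[b3](mulKf a2nz) e1; field.
have b1nz : b1 != 0.
  apply/eqP => b1z; apply: nb; subst b1.
  have b2z : b2 = 0 by apply/eqP; move: e3; rewrite mulr0 => /eqP; rewrite mulf_eq0 (negbTE a1nz).
  have b3z : b3 = 0 by apply/eqP; move: e2; rewrite mulr0 => /esym/eqP; rewrite mulf_eq0 (negbTE a1nz).
  by rewrite b2z b3z.
exists (b1 / a1); split; first by rewrite mulf_neq0 ?invr_eq0.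
rewrite divfK //; congr (_, _, _).
- by rewrite /= -[b2](mulKf a1nz) e3; field.
- by rewrite /= -[b3](mulKf a1nz) -e2; field.
Qed.

Lemma two_of_count (T : eqType) (P : pred T) (s : seq T) : uniq s -> (2 <= count P s)%nat ->
  exists x y, [/\ x \in s, y \in s, x != y, P x & P y].
Proof.
move=> us hc.
have /hasP[x xs Px] : has P s by rewrite has_count; lia.
have : (0 < count P (rem x s))%nat.
  have := perm_to_rem xs => /permP /(_ P); rewrite /= Px => h; lia.
rewrite -has_count => /hasP[y ys Py].
exists x, y; split => //; first exact: (mem_rem ys).
by apply/eqP => exy; move: ys; rewrite -exy mem_rem_uniqF.
Qed.

Lemma card_le P n m : card_P2 P n -> card_P2 P m -> (n <= m)%nat.
Proof.
move=> [s [_ hs1 hs2 _]] [t [_ _ _ ht]].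
have ex : forall i : 'I_n, exists j : 'I_m, proportional3 (nth (0,0,0) s i) (nth (0,0,0) t j).
  move=> i; have [nz Pi] := hs1 i (ltn_ord i).
  by have [j jm pj] := ht _ nz Pi; exists (Ordinal jm).
pose g i := proj1_sig (constructive_indefinite_description _ (ex i)).
have gP (i : 'I_n) : proportional3 (nth (0,0,0) s i) (nth (0,0,0) t (g i)).
  exact: (proj2_sig (constructive_indefinite_description _ (ex i))).
have ginj : injective g.
  move=> i i' hii'; apply/val_inj/eqP; apply/negPn/negP => hne.
  apply: (hs2 i i' (ltn_ord i) (ltn_ord i')); first by apply/eqP.
  apply: (prop_trans (gP i)); rewrite hii'; exact: prop_sym (gP i').
by have := leq_card g ginj; rewrite !card_ord.
Qed.

Lemma card_uniq P n m : card_P2 P n -> card_P2 P m -> n = m.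
Proof. by move=> h1 h2; apply/eqP; rewrite eqn_leq !(card_le h1 h2, card_le h2 h1). Qed.

Definition checkP (PZ : seq V3) : bool :=
  uniq PZ && all (fun p => ~~ zis03 p) PZ &&
  all (fun p => all (fun q => (p == q) || ~~ zis03 (crossZ p q)) PZ) PZ.

Definition checkL (LZ PZ : seq V3) : bool :=
  uniq LZ && all (fun l => ~~ zis03 l) LZ &&
  all (fun l => all (fun l' => (l == l') || (~~ zis03 (crossZ l l') &&
      has (fun p => zis03 (crossZ (crossZ l l') p)) PZ)) LZ) LZ.

Lemma phi3_zero e v : zis03 v -> phi3 e v = (0, 0, 0).
Proof.
rewrite /zis03 /zis0 => /and3P[/andP[/Z.eqb_eq h1 /Z.eqb_eq h2] /andP[/Z.eqb_eq h3 /Z.eqb_eq h4]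
  /andP[/Z.eqb_eq h5 /Z.eqb_eq h6]].
by rewrite /phi3 /phi h1 h2 h3 h4 h5 h6 !Zr0 mul0r addr0.
Qed.

Lemma notprop_phi e (he : e ^+ 2 + 1 = 0) p q : ~~ zis03 (crossZ p q) ->
  ~ proportional3 (phi3 e p) (phi3 e q).
Proof.
move=> h /prop_cross0; rewrite cross_phi // => h0.
by apply: (nonzero_phi he h).
Qed.

Definition zv0 : V3 := (z0, z0, z0).

Lemma card_lemma e (he : e ^+ 2 + 1 = 0) LZ PZ i : checkP PZ -> checkL LZ PZ -> (2 <= i)%nat ->
  n_pts (map (phi3 e) LZ) i (count (fun p => multZ LZ p == i) PZ).
Proof.
move=> /andP[/andP[uP nzP] crP] /andP[/andP[uL nzL] crL] hi.
set PF := filter (fun p => multZ LZ p == i) PZ.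
exists (map (phi3 e) PF); split.
- by rewrite size_map size_filter.
- move=> k hk; rewrite -size_filter -/PF in hk; rewrite (nth_map zv0) //.
  have := mem_nth zv0 hk; rewrite mem_filter => /andP[/eqP hm hp].
  split; first exact/(nonzero_phi he)/(allP nzP).
  by rewrite mult_phi.
- move=> k k' hk hk' hkk'; rewrite -size_filter -/PF in hk hk'; rewrite !(nth_map zv0) //.
  apply: notprop_phi => //.
  have hne : nth zv0 PF k != nth zv0 PF k' by rewrite nth_uniq ?filter_uniq //; apply/eqP.
  have := mem_nth zv0 hk; have := mem_nth zv0 hk'; rewrite !mem_filter.
  move=> /andP[_ h2] /andP[_ h1].
  by have := allP (allP crP _ h1) _ h2; rewrite (negbTE hne).
- move=> v nzv hv.
  have hc : leq 2%nat (count (fun l => dot3 (phi3 e l) v == 0) LZ).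
    by move: hv; rewrite /mult_at count_map => ->.
  have [l [l' [lL l'L nll' hl hl']]] := two_of_count uL hc.
  have := allP (allP crL l lL) l' l'L; rewrite (negbTE nll') /= => /andP[nzc /hasP[p pP hp]].
  have p1 : proportional3 v (phi3 e (crossZ l l')).
    apply: par_lemma; first exact: nonzero_phi.
      exact: nzv.
    by rewrite -cross_phi //; apply: perp_cross; apply/eqP.
  have p2 : proportional3 (phi3 e p) (phi3 e (crossZ l l')).
    apply: par_lemma; first exact: nonzero_phi.
      exact/(nonzero_phi he)/(allP nzP).
    by rewrite cross_phi // phi3_zero.
  have pv : proportional3 v (phi3 e p) := prop_trans p1 (prop_sym p2).
  have mp : multZ LZ p = i by rewrite -(mult_phi he) -(prop_mult _ pv) hv.
  have pPF : p \in PF by rewrite mem_filter mp eqxx.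
  exists (index p PF); first by rewrite -size_filter -/PF index_mem.
  by rewrite (nth_map zv0) ?index_mem // nth_index.
Qed.

Lemma reduced_lemma e (he : e ^+ 2 + 1 = 0) LZ PZ : checkL LZ PZ -> reduced_arr (map (phi3 e) LZ).
Proof.
move=> /andP[/andP[uL nzL] crL]; split.
- move=> k hk; rewrite size_map in hk; rewrite (nth_map zv0) //.
  exact/(nonzero_phi he)/(allP nzL)/mem_nth.
- move=> k k' hk hk' hne; rewrite size_map in hk hk'; rewrite !(nth_map zv0) //.
  apply: notprop_phi => //.
  have hne' : nth zv0 LZ k != nth zv0 LZ k' by rewrite nth_uniq //; apply/eqP.
  have := allP (allP crL _ (mem_nth zv0 hk)) _ (mem_nth zv0 hk').
  by rewrite (negbTE hne') => /andP[].
Qed.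


Definition LZ1 : seq V3 := [:: ((0, 0)%Z, (1, 0)%Z, (0, 0)%Z); ((0, 0)%Z, (1, 0)%Z, (-1, 0)%Z); ((0, 0)%Z, (1, 0)%Z, (1, 0)%Z); ((-1, 0)%Z, (1, 0)%Z, (0, 0)%Z); ((1, 0)%Z, (1, 0)%Z, (0, 0)%Z); ((-1, 0)%Z, (1, 0)%Z, (-2, 0)%Z); ((-1, 0)%Z, (1, 0)%Z, (2, 0)%Z); ((1, 0)%Z, (1, 0)%Z, (-2, 0)%Z); ((1, 0)%Z, (1, 0)%Z, (2, 0)%Z)].

Definition PZ1 : seq V3 := [:: ((-1, 0)%Z, (0, 0)%Z, (0, 0)%Z); ((0, 0)%Z, (0, 0)%Z, (1, 0)%Z); ((-2, 0)%Z, (0, 0)%Z, (1, 0)%Z); ((2, 0)%Z, (0, 0)%Z, (1, 0)%Z); ((1, 0)%Z, (1, 0)%Z, (1, 0)%Z); ((1, 0)%Z, (-1, 0)%Z, (-1, 0)%Z); ((3, 0)%Z, (1, 0)%Z, (1, 0)%Z); ((3, 0)%Z, (-1, 0)%Z, (-1, 0)%Z); ((-1, 0)%Z, (-1, 0)%Z, (1, 0)%Z); ((-1, 0)%Z, (1, 0)%Z, (-1, 0)%Z); ((-3, 0)%Z, (-1, 0)%Z, (1, 0)%Z); ((-3, 0)%Z, (1, 0)%Z, (-1, 0)%Z); ((-2, 0)%Z, (-2, 0)%Z, (0, 0)%Z); ((-2, 0)%Z, (2, 0)%Z, (0, 0)%Z); ((0, 0)%Z, (-4, 0)%Z, (-2,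 0)%Z); ((0, 0)%Z, (4, 0)%Z, (-2, 0)%Z)].

Definition SyzA1 : CPoly := [:: ((0, 2, 2)%nat, (-36, 0)%Z); ((0, 4, 0)%nat, (9, 0)%Z); ((2, 0, 2)%nat, (12, 0)%Z); ((4, 0, 0)%nat, (-1, 0)%Z)].

Definition SyzB1 : CPoly := [:: ((1, 1, 2)%nat, (-24, 0)%Z); ((1, 3, 0)%nat, (6, 0)%Z); ((3, 1, 0)%nat, (2, 0)%Z)].

Definition SyzC1 : CPoly := [:: ((1, 2, 1)%nat, (-18, 0)%Z); ((3, 0, 1)%nat, (2, 0)%Z)].

Definition Outs1 : seq Mono := [:: (0, 2, 9)%nat; (0, 3, 8)%nat; (0, 4, 7)%nat; (0, 5, 6)%nat; (0, 6, 5)%nat; (0, 7, 4)%nat; (0, 8, 3)%nat; (0, 9, 2)%nat; (1, 1, 9)%nat; (1, 2, 8)%nat; (1, 3, 7)%nat; (1, 4, 6)%nat; (1, 5, 5)%nat; (1, 6, 4)%nat; (1, 7, 3)%nat; (1, 9, 1)%nat; (1, 10, 0)%nat; (2, 1, 8)%nat; (2, 2, 7)%nat; (2, 3, 6)%nat; (2, 4, 5)%nat; (2, 5, 4)%nat; (2, 6, 3)%nat; (2, 9, 0)%nat; (3, 0, 8)%nat; (3, 1, 7)%nat; (3, 2, 6)%nat; (3, 3, 5)%nat; (3, 4, 4)%nat; (4, 1, 6)%nat].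

Definition W1 : seq (seq ZI) := [:: [:: (0, 0)%Z; (0, 0)%Z; (0, 0)%Z; (0, 0)%Z; (0, 0)%Z; (0, 0)%Z; (0, 0)%Z; (0, 0)%Z; (1, 0)%Z; (0, 0)%Z; (0, 0)%Z; (0, 0)%Z; (0, 0)%Z; (0, 0)%Z; (0, 0)%Z; (0, 0)%Z; (0, 0)%Z; (0, 0)%Z; (0, 0)%Z; (0, 0)%Z; (0, 0)%Z; (0, 0)%Z; (0, 0)%Z; (0, 0)%Z; (0, 0)%Z; (0, 0)%Z; (0, 0)%Z; (0, 0)%Z; (0, 0)%Z; (0, 0)%Z];
  [:: (0, 0)%Z; (0, 0)%Z; (0, 0)%Z; (0, 0)%Z; (0, 0)%Z; (0, 0)%Z; (0, 0)%Z; (0, 0)%Z; (0, 0)%Z; (1, 0)%Z; (0, 0)%Z; (0, 0)%Z; (0, 0)%Z; (0, 0)%Z; (0, 0)%Z; (0, 0)%Z; (0, 0)%Z; (0, 0)%Z; (0, 0)%Z; (0, 0)%Z; (0, 0)%Z; (0, 0)%Z; (0, 0)%Z; (0, 0)%Z; (3, 0)%Z; (0, 0)%Z; (0, 0)%Z; (0, 0)%Z; (0, 0)%Z; (0, 0)%Z];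
  [:: (0, 0)%Z; (0, 0)%Z; (0, 0)%Z; (0, 0)%Z; (0, 0)%Z; (0, 0)%Z; (0, 0)%Z; (0, 0)%Z; (-13, 0)%Z; (0, 0)%Z; (-4, 0)%Z; (0, 0)%Z; (-16, 0)%Z; (0, 0)%Z; (-64, 0)%Z; (-256, 0)%Z; (0, 0)%Z; (0, 0)%Z; (0, 0)%Z; (0, 0)%Z; (0, 0)%Z; (0, 0)%Z; (0, 0)%Z; (0, 0)%Z; (0, 0)%Z; (0, 0)%Z; (0, 0)%Z; (0, 0)%Z; (0, 0)%Z; (0, 0)%Z];
  [:: (0, 0)%Z; (0, 0)%Z; (0, 0)%Z; (0, 0)%Z; (0, 0)%Z; (0, 0)%Z; (0, 0)%Z; (0, 0)%Z; (0, 0)%Z; (13, 0)%Z; (0, 0)%Z; (16, 0)%Z; (0, 0)%Z; (16, 0)%Z; (0, 0)%Z; (0, 0)%Z; (-128, 0)%Z; (0, 0)%Z; (0, 0)%Z; (0, 0)%Z; (0, 0)%Z; (0, 0)%Z; (0, 0)%Z; (0, 0)%Z; (-18, 0)%Z; (0, 0)%Z; (0, 0)%Z; (0, 0)%Z; (0, 0)%Z; (0, 0)%Z];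
  [:: (0, 0)%Z; (45, 0)%Z; (0, 0)%Z; (36, 0)%Z; (0, 0)%Z; (48, 0)%Z; (0, 0)%Z; (64, 0)%Z; (0, 0)%Z; (0, 0)%Z; (0, 0)%Z; (0, 0)%Z; (0, 0)%Z; (0, 0)%Z; (0, 0)%Z; (0, 0)%Z; (0, 0)%Z; (18, 0)%Z; (0, 0)%Z; (0, 0)%Z; (0, 0)%Z; (0, 0)%Z; (0, 0)%Z; (0, 0)%Z; (0, 0)%Z; (0, 0)%Z; (0, 0)%Z; (0, 0)%Z; (0, 0)%Z; (0, 0)%Z];
  [:: (139, 0)%Z; (0, 0)%Z; (166, 0)%Z; (0, 0)%Z; (128, 0)%Z; (0, 0)%Z; (96, 0)%Z; (0, 0)%Z; (0, 0)%Z; (0, 0)%Z; (0, 0)%Z; (0, 0)%Z; (0, 0)%Z; (0, 0)%Z; (0, 0)%Z; (0, 0)%Z; (0, 0)%Z; (0, 0)%Z; (114, 0)%Z; (0, 0)%Z; (96, 0)%Z; (0, 0)%Z; (96, 0)%Z; (0, 0)%Z; (0, 0)%Z; (0, 0)%Z; (0, 0)%Z; (0, 0)%Z; (0, 0)%Z; (0, 0)%Z];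
  [:: (0, 0)%Z; (42, 0)%Z; (0, 0)%Z; (44, 0)%Z; (0, 0)%Z; (64, 0)%Z; (0, 0)%Z; (192, 0)%Z; (0, 0)%Z; (0, 0)%Z; (0, 0)%Z; (0, 0)%Z; (0, 0)%Z; (0, 0)%Z; (0, 0)%Z; (0, 0)%Z; (0, 0)%Z; (39, 0)%Z; (0, 0)%Z; (48, 0)%Z; (0, 0)%Z; (48, 0)%Z; (0, 0)%Z; (-384, 0)%Z; (0, 0)%Z; (0, 0)%Z; (0, 0)%Z; (0, 0)%Z; (0, 0)%Z; (0, 0)%Z];
  [:: (0, 0)%Z; (0, 0)%Z; (0, 0)%Z; (0, 0)%Z; (0, 0)%Z; (0, 0)%Z; (0, 0)%Z; (0, 0)%Z; (535, 0)%Z; (0, 0)%Z; (364, 0)%Z; (0, 0)%Z; (304, 0)%Z; (0, 0)%Z; (448, 0)%Z; (768, 0)%Z; (0, 0)%Z; (0, 0)%Z; (0, 0)%Z; (0, 0)%Z; (0, 0)%Z; (0, 0)%Z; (0, 0)%Z; (0, 0)%Z; (0, 0)%Z; (144, 0)%Z; (0, 0)%Z; (0, 0)%Z; (0, 0)%Z; (0, 0)%Z];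
  [:: (0, 0)%Z; (0, 0)%Z; (0, 0)%Z; (0, 0)%Z; (0, 0)%Z; (0, 0)%Z; (0, 0)%Z; (0, 0)%Z; (0, 0)%Z; (625, 0)%Z; (0, 0)%Z; (376, 0)%Z; (0, 0)%Z; (112, 0)%Z; (0, 0)%Z; (0, 0)%Z; (640, 0)%Z; (0, 0)%Z; (0, 0)%Z; (0, 0)%Z; (0, 0)%Z; (0, 0)%Z; (0, 0)%Z; (0, 0)%Z; (441, 0)%Z; (0, 0)%Z; (360, 0)%Z; (0, 0)%Z; (144, 0)%Z; (0, 0)%Z];
  [:: (0, 0)%Z; (380, 0)%Z; (0, 0)%Z; (132, 0)%Z; (0, 0)%Z; (-224, 0)%Z; (0, 0)%Z; (-832, 0)%Z; (0, 0)%Z; (0, 0)%Z; (0, 0)%Z; (0, 0)%Z; (0, 0)%Z; (0, 0)%Z; (0, 0)%Z; (0, 0)%Z; (0, 0)%Z; (393, 0)%Z; (0, 0)%Z; (168, 0)%Z; (0, 0)%Z; (-48, 0)%Z; (0, 0)%Z; (1152, 0)%Z; (0, 0)%Z; (0, 0)%Z; (0, 0)%Z; (0, 0)%Z; (0, 0)%Z; (216, 0)%Z];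
  [:: (-1, 0)%Z; (0, 0)%Z; (0, 0)%Z; (0, 0)%Z; (0, 0)%Z; (0, 0)%Z; (0, 0)%Z; (0, 0)%Z; (0, 0)%Z; (0, 0)%Z; (0, 0)%Z; (0, 0)%Z; (0, 0)%Z; (0, 0)%Z; (0, 0)%Z; (0, 0)%Z; (0, 0)%Z; (0, 0)%Z; (0, 0)%Z; (0, 0)%Z; (0, 0)%Z; (0, 0)%Z; (0, 0)%Z; (0, 0)%Z; (0, 0)%Z; (0, 0)%Z; (0, 0)%Z; (0, 0)%Z; (0, 0)%Z; (0, 0)%Z];
  [:: (0, 0)%Z; (27, 0)%Z; (0, 0)%Z; (36, 0)%Z; (0, 0)%Z; (48, 0)%Z; (0, 0)%Z; (64, 0)%Z; (0, 0)%Z; (0, 0)%Z; (0, 0)%Z; (0, 0)%Z; (0, 0)%Z; (0, 0)%Z; (0, 0)%Z; (0, 0)%Z; (0, 0)%Z; (0, 0)%Z; (0, 0)%Z; (0, 0)%Z; (0, 0)%Z; (0, 0)%Z; (0, 0)%Z; (0, 0)%Z; (0, 0)%Z; (0, 0)%Z; (0, 0)%Z; (0, 0)%Z; (0, 0)%Z; (0, 0)%Z];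
  [:: (29, 0)%Z; (0, 0)%Z; (26, 0)%Z; (0, 0)%Z; (32, 0)%Z; (0, 0)%Z; (32, 0)%Z; (0, 0)%Z; (0, 0)%Z; (0, 0)%Z; (0, 0)%Z; (0, 0)%Z; (0, 0)%Z; (0, 0)%Z; (0, 0)%Z; (0, 0)%Z; (0, 0)%Z; (0, 0)%Z; (0, 0)%Z; (0, 0)%Z; (0, 0)%Z; (0, 0)%Z; (0, 0)%Z; (0, 0)%Z; (0, 0)%Z; (0, 0)%Z; (0, 0)%Z; (0, 0)%Z; (0, 0)%Z; (0, 0)%Z];
  [:: (0, 0)%Z; (-1, 0)%Z; (0, 0)%Z; (-4, 0)%Z; (0, 0)%Z; (-16, 0)%Z; (0, 0)%Z; (-64, 0)%Z; (0, 0)%Z; (0, 0)%Z; (0, 0)%Z; (0, 0)%Z; (0, 0)%Z; (0, 0)%Z; (0, 0)%Z; (0, 0)%Z; (0, 0)%Z; (0, 0)%Z; (0, 0)%Z; (0, 0)%Z; (0, 0)%Z; (0, 0)%Z; (0, 0)%Z; (0, 0)%Z; (0, 0)%Z; (0, 0)%Z; (0, 0)%Z; (0, 0)%Z; (0, 0)%Z; (0, 0)%Z];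
  [:: (0, 0)%Z; (0, 0)%Z; (0, 0)%Z; (0, 0)%Z; (0, 0)%Z; (0, 0)%Z; (0, 0)%Z; (0, 0)%Z; (0, 0)%Z; (0, 0)%Z; (0, 0)%Z; (0, 0)%Z; (0, 0)%Z; (0, 0)%Z; (0, 0)%Z; (0, 0)%Z; (0, 0)%Z; (0, 0)%Z; (0, 0)%Z; (0, 0)%Z; (0, 0)%Z; (0, 0)%Z; (0, 0)%Z; (0, 0)%Z; (1, 0)%Z; (0, 0)%Z; (0, 0)%Z; (0, 0)%Z; (0, 0)%Z; (0, 0)%Z];
  [:: (0, 0)%Z; (0, 0)%Z; (0, 0)%Z; (0, 0)%Z; (0, 0)%Z; (0, 0)%Z; (0, 0)%Z; (0, 0)%Z; (13, 0)%Z; (0, 0)%Z; (13, 0)%Z; (0, 0)%Z; (16, 0)%Z; (0, 0)%Z; (16, 0)%Z; (0, 0)%Z; (0, 0)%Z; (0, 0)%Z; (0, 0)%Z; (0, 0)%Z; (0, 0)%Z; (0, 0)%Z; (0, 0)%Z; (0, 0)%Z; (0, 0)%Z; (0, 0)%Z; (0, 0)%Z; (0, 0)%Z; (0, 0)%Z; (0, 0)%Z];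
  [:: (0, 0)%Z; (0, 0)%Z; (0, 0)%Z; (0, 0)%Z; (0, 0)%Z; (0, 0)%Z; (0, 0)%Z; (0, 0)%Z; (0, 0)%Z; (13, 0)%Z; (0, 0)%Z; (16, 0)%Z; (0, 0)%Z; (16, 0)%Z; (0, 0)%Z; (0, 0)%Z; (0, 0)%Z; (0, 0)%Z; (0, 0)%Z; (0, 0)%Z; (0, 0)%Z; (0, 0)%Z; (0, 0)%Z; (0, 0)%Z; (-18, 0)%Z; (0, 0)%Z; (0, 0)%Z; (0, 0)%Z; (0, 0)%Z; (0, 0)%Z];
  [:: (27, 0)%Z; (0, 0)%Z; (78, 0)%Z; (0, 0)%Z; (64, 0)%Z; (0, 0)%Z; (32, 0)%Z; (0, 0)%Z; (0, 0)%Z; (0, 0)%Z; (0, 0)%Z; (0, 0)%Z; (0, 0)%Z; (0, 0)%Z; (0, 0)%Z; (0, 0)%Z; (0, 0)%Z; (0, 0)%Z; (78, 0)%Z; (0, 0)%Z; (96, 0)%Z; (0, 0)%Z; (96, 0)%Z; (0, 0)%Z; (0, 0)%Z; (0, 0)%Z; (0, 0)%Z; (0, 0)%Z; (0, 0)%Z; (0, 0)%Z];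
  [:: (0, 0)%Z; (77, 0)%Z; (0, 0)%Z; (60, 0)%Z; (0, 0)%Z; (16, 0)%Z; (0, 0)%Z; (-64, 0)%Z; (0, 0)%Z; (0, 0)%Z; (0, 0)%Z; (0, 0)%Z; (0, 0)%Z; (0, 0)%Z; (0, 0)%Z; (0, 0)%Z; (0, 0)%Z; (78, 0)%Z; (0, 0)%Z; (96, 0)%Z; (0, 0)%Z; (96, 0)%Z; (0, 0)%Z; (0, 0)%Z; (0, 0)%Z; (0, 0)%Z; (0, 0)%Z; (0, 0)%Z; (0, 0)%Z; (0, 0)%Z];
  [:: (0, 0)%Z; (0, 0)%Z; (0, 0)%Z; (0, 0)%Z; (0, 0)%Z; (0, 0)%Z; (0, 0)%Z; (0, 0)%Z; (0, 0)%Z; (232, 0)%Z; (0, 0)%Z; (208, 0)%Z; (0, 0)%Z; (160, 0)%Z; (0, 0)%Z; (0, 0)%Z; (-512, 0)%Z; (0, 0)%Z; (0, 0)%Z; (0, 0)%Z; (0, 0)%Z; (0, 0)%Z; (0, 0)%Z; (0, 0)%Z; (63, 0)%Z; (0, 0)%Z; (144, 0)%Z; (0, 0)%Z; (144, 0)%Z; (0, 0)%Z];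
  [:: (0, 0)%Z; (-39, 0)%Z; (0, 0)%Z; (-36, 0)%Z; (0, 0)%Z; (-48, 0)%Z; (0, 0)%Z; (-64, 0)%Z; (0, 0)%Z; (0, 0)%Z; (0, 0)%Z; (0, 0)%Z; (0, 0)%Z; (0, 0)%Z; (0, 0)%Z; (0, 0)%Z; (0, 0)%Z; (0, 0)%Z; (0, 0)%Z; (0, 0)%Z; (0, 0)%Z; (0, 0)%Z; (0, 0)%Z; (0, 0)%Z; (0, 0)%Z; (0, 0)%Z; (0, 0)%Z; (0, 0)%Z; (0, 0)%Z; (0, 0)%Z];
  [:: (-59, 0)%Z; (0, 0)%Z; (-38, 0)%Z; (0, 0)%Z; (-32, 0)%Z; (0, 0)%Z; (-32, 0)%Z; (0, 0)%Z; (0, 0)%Z; (0, 0)%Z; (0, 0)%Z; (0, 0)%Z; (0, 0)%Z; (0, 0)%Z; (0, 0)%Z; (0, 0)%Z; (0, 0)%Z; (0, 0)%Z; (0, 0)%Z; (0, 0)%Z; (0, 0)%Z; (0, 0)%Z; (0, 0)%Z; (0, 0)%Z; (0, 0)%Z; (0, 0)%Z; (0, 0)%Z; (0, 0)%Z; (0, 0)%Z; (0, 0)%Z];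
  [:: (0, 0)%Z; (115, 0)%Z; (0, 0)%Z; (172, 0)%Z; (0, 0)%Z; (304, 0)%Z; (0, 0)%Z; (448, 0)%Z; (0, 0)%Z; (0, 0)%Z; (0, 0)%Z; (0, 0)%Z; (0, 0)%Z; (0, 0)%Z; (0, 0)%Z; (0, 0)%Z; (0, 0)%Z; (0, 0)%Z; (0, 0)%Z; (0, 0)%Z; (0, 0)%Z; (0, 0)%Z; (0, 0)%Z; (0, 0)%Z; (0, 0)%Z; (0, 0)%Z; (0, 0)%Z; (0, 0)%Z; (0, 0)%Z; (0, 0)%Z];
  [:: (39, 0)%Z; (0, 0)%Z; (36, 0)%Z; (0, 0)%Z; (48, 0)%Z; (0, 0)%Z; (64, 0)%Z; (0, 0)%Z; (0, 0)%Z; (0, 0)%Z; (0, 0)%Z; (0, 0)%Z; (0, 0)%Z; (0, 0)%Z; (0, 0)%Z; (0, 0)%Z; (0, 0)%Z; (0, 0)%Z; (0, 0)%Z; (0, 0)%Z; (0, 0)%Z; (0, 0)%Z; (0, 0)%Z; (0, 0)%Z; (0, 0)%Z; (0, 0)%Z; (0, 0)%Z; (0, 0)%Z; (0, 0)%Z; (0, 0)%Z];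
  [:: (0, 0)%Z; (0, 0)%Z; (0, 0)%Z; (0, 0)%Z; (0, 0)%Z; (0, 0)%Z; (0, 0)%Z; (0, 0)%Z; (-165, 0)%Z; (0, 0)%Z; (-156, 0)%Z; (0, 0)%Z; (-144, 0)%Z; (0, 0)%Z; (-192, 0)%Z; (-256, 0)%Z; (0, 0)%Z; (0, 0)%Z; (0, 0)%Z; (0, 0)%Z; (0, 0)%Z; (0, 0)%Z; (0, 0)%Z; (0, 0)%Z; (0, 0)%Z; (0, 0)%Z; (0, 0)%Z; (0, 0)%Z; (0, 0)%Z; (0, 0)%Z];
  [:: (0, 0)%Z; (0, 0)%Z; (0, 0)%Z; (0, 0)%Z; (0, 0)%Z; (0, 0)%Z; (0, 0)%Z; (0, 0)%Z; (0, 0)%Z; (-6, 0)%Z; (0, 0)%Z; (-6, 0)%Z; (0, 0)%Z; (0, 0)%Z; (0, 0)%Z; (0, 0)%Z; (-32, 0)%Z; (0, 0)%Z; (0, 0)%Z; (0, 0)%Z; (0, 0)%Z; (0, 0)%Z; (0, 0)%Z; (0, 0)%Z; (27, 0)%Z; (0, 0)%Z; (0, 0)%Z; (0, 0)%Z; (0, 0)%Z; (0, 0)%Z];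
  [:: (0, 0)%Z; (0, 0)%Z; (0, 0)%Z; (0, 0)%Z; (0, 0)%Z; (0, 0)%Z; (0, 0)%Z; (0, 0)%Z; (39, 0)%Z; (0, 0)%Z; (36, 0)%Z; (0, 0)%Z; (48, 0)%Z; (0, 0)%Z; (64, 0)%Z; (0, 0)%Z; (0, 0)%Z; (0, 0)%Z; (0, 0)%Z; (0, 0)%Z; (0, 0)%Z; (0, 0)%Z; (0, 0)%Z; (0, 0)%Z; (0, 0)%Z; (0, 0)%Z; (0, 0)%Z; (0, 0)%Z; (0, 0)%Z; (0, 0)%Z];
  [:: (0, 0)%Z; (-7, 0)%Z; (0, 0)%Z; (36, 0)%Z; (0, 0)%Z; (144, 0)%Z; (0, 0)%Z; (320, 0)%Z; (0, 0)%Z; (0, 0)%Z; (0, 0)%Z; (0, 0)%Z; (0, 0)%Z; (0, 0)%Z; (0, 0)%Z; (0, 0)%Z; (0, 0)%Z; (-48, 0)%Z; (0, 0)%Z; (-48, 0)%Z; (0, 0)%Z; (0, 0)%Z; (0, 0)%Z; (-256, 0)%Z; (0, 0)%Z; (0, 0)%Z; (0, 0)%Z; (0, 0)%Z; (0, 0)%Z; (0, 0)%Z];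
  [:: (12, 0)%Z; (0, 0)%Z; (36, 0)%Z; (0, 0)%Z; (36, 0)%Z; (0, 0)%Z; (32, 0)%Z; (0, 0)%Z; (0, 0)%Z; (0, 0)%Z; (0, 0)%Z; (0, 0)%Z; (0, 0)%Z; (0, 0)%Z; (0, 0)%Z; (0, 0)%Z; (0, 0)%Z; (0, 0)%Z; (27, 0)%Z; (0, 0)%Z; (36, 0)%Z; (0, 0)%Z; (48, 0)%Z; (0, 0)%Z; (0, 0)%Z; (0, 0)%Z; (0, 0)%Z; (0, 0)%Z; (0, 0)%Z; (0, 0)%Z];
  [:: (0, 0)%Z; (0, 0)%Z; (0, 0)%Z; (0, 0)%Z; (0, 0)%Z; (0, 0)%Z; (0, 0)%Z; (0, 0)%Z; (-37, 0)%Z; (0, 0)%Z; (-28, 0)%Z; (0, 0)%Z; (80, 0)%Z; (0, 0)%Z; (320, 0)%Z; (512, 0)%Z; (0, 0)%Z; (0, 0)%Z; (0, 0)%Z; (0, 0)%Z; (0, 0)%Z; (0, 0)%Z; (0, 0)%Z; (0, 0)%Z; (0, 0)%Z; (-144, 0)%Z; (0, 0)%Z; (-144, 0)%Z; (0, 0)%Z; (0, 0)%Z]].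

Definition LZ2 : seq V3 := [:: ((1, 0)%Z, (0, 0)%Z, (0, 0)%Z); ((0, 0)%Z, (1, 0)%Z, (0, 0)%Z); ((0, 0)%Z, (0, 0)%Z, (1, 0)%Z); ((1, 0)%Z, (1, 0)%Z, (0, 0)%Z); ((1, 0)%Z, (0, 0)%Z, (1, 0)%Z); ((0, 0)%Z, (1, 0)%Z, (-1, 0)%Z); ((1, 0)%Z, (1, 0)%Z, (0, 1)%Z); ((1, 0)%Z, (0, -1)%Z, (1, 0)%Z); ((1, 0)%Z, (0, -1)%Z, (0, 1)%Z)].

Definition PZ2 : seq V3 := [:: ((0, 0)%Z, (0, 0)%Z, (1, 0)%Z); ((0, 0)%Z, (-1, 0)%Z, (0, 0)%Z); ((0, 0)%Z, (1, 0)%Z, (1, 0)%Z); ((0, 0)%Z, (0, -1)%Z, (1, 0)%Z); ((1, 0)%Z, (0, 0)%Z, (0, 0)%Z); ((1, 0)%Z, (0, 0)%Z, (-1, 0)%Z); ((0, 1)%Z, (0, 0)%Z, (-1, 0)%Z); ((-1, 0)%Z, (1, 0)%Z, (0, 0)%Z); ((0, 1)%Z, (1, 0)%Z, (0, 0)%Z); ((1, 0)%Z, (-1, 0)%Z, (-1, 0)%Z); ((1, 0)%Z, (-1, 0)%Z, (-1, -1)%Z); ((0, 1)%Z, (0, -1)%Z, (-1, -1)%Z); ((-1, 0)%Z, (1, -1)%Z, (1, 0)%Z); ((0, 1)%Z, (1, -1)%Z, (0, -1)%Z); ((1, 1)%Z, (-1, 0)%Z, (-1, 0)%Z); ((1,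 -1)%Z, (-1, 0)%Z, (-1, 0)%Z)].

Definition SyzA2 : CPoly := [:: ((1, 0, 4)%nat, (-918, -1374)%Z); ((1, 1, 3)%nat, (2014, 4842)%Z); ((1, 2, 2)%nat, (-646, -7618)%Z); ((1, 3, 1)%nat, (-870, 5290)%Z); ((1, 4, 0)%nat, (192, -1224)%Z); ((2, 0, 3)%nat, (-1251, 57)%Z); ((2, 1, 2)%nat, (4492, -244)%Z); ((2, 2, 1)%nat, (-3841, -293)%Z); ((2, 3, 0)%nat, (246, 738)%Z); ((3, 0, 2)%nat, (144, 312)%Z); ((3, 1, 1)%nat, (594, -558)%Z); ((3, 2, 0)%nat, (-1092, 504)%Z); ((4, 0, 1)%nat, (171, 63)%Z); ((4, 1, 0)%nat, (-342, -126)%Z)].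

Definition SyzB2 : CPoly := [:: ((0, 1, 4)%nat, (-918, -1374)%Z); ((0, 2, 3)%nat, (-857, 2619)%Z); ((0, 3, 2)%nat, (3152, -4)%Z); ((0, 4, 1)%nat, (-1167, -1811)%Z); ((0, 5, 0)%nat, (-96, 612)%Z); ((1, 1, 3)%nat, (-4122, -2166)%Z); ((1, 2, 2)%nat, (3304, 8252)%Z); ((1, 3, 1)%nat, (2522, -6494)%Z); ((1, 4, 0)%nat, (-1374, 918)%Z); ((2, 1, 2)%nat, (-4842, 1194)%Z); ((2, 2, 1)%nat, (6057, -99)%Z); ((2, 3, 0)%nat, (-1056, -648)%Z); ((3, 1, 1)%nat, (-1026, -378)%Z); ((3, 2, 0)%nat, (1026, 378)%Z)].

Definition SyzC2 : CPoly := [:: ((0, 0, 5)%nat, (459, 687)%Z); ((0, 1, 4)%nat, (178, -2826)%Z); ((0, 2, 3)%nat, (-3103, 2741)%Z); ((0, 3, 2)%nat, (2388, 664)%Z); ((0, 4, 1)%nat, (192, -1224)%Z); ((1, 0, 4)%nat, (2250, 570)%Z); ((1, 1, 3)%nat, (-5138, -5734)%Z); ((1, 2, 2)%nat, (-286, 9562)%Z); ((1, 3, 1)%nat, (3504, -3888)%Z); ((2, 0, 3)%nat, (2097, -1299)%Z); ((2, 1, 2)%nat, (-6858, 1746)%Z); ((2, 2, 1)%nat, (4920, 0)%Z)].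

Definition Outs2 : seq Mono := [:: (0, 2, 10)%nat; (0, 3, 9)%nat; (0, 4, 8)%nat; (0, 5, 7)%nat; (0, 6, 6)%nat; (1, 1, 10)%nat; (1, 2, 9)%nat; (1, 3, 8)%nat; (1, 4, 7)%nat; (1, 5, 6)%nat; (1, 6, 5)%nat; (1, 7, 4)%nat; (1, 8, 3)%nat; (2, 1, 9)%nat; (2, 2, 8)%nat; (2, 3, 7)%nat; (2, 4, 6)%nat; (2, 5, 5)%nat; (2, 6, 4)%nat; (2, 7, 3)%nat; (3, 0, 9)%nat; (3, 1, 8)%nat; (3, 2, 7)%nat; (3, 3, 6)%nat; (3, 4, 5)%nat; (3, 5, 4)%nat; (3, 6, 3)%nat; (3, 7, 2)%nat; (3, 8, 1)%nat; (3, 9, 0)%nat; (4, 0, 8)%nat; (4, 1, 7)%nat; (4, 2, 6)%nat; (4, 3, 5)%nat; (4, 4, 4)%nat; (4, 5, 3)%nat; (4, 6, 2)%nat; (4, 7, 1)%nat; (4, 8, 0)%nat; (5, 0, 7)%nat; (5, 1, 6)%nat; (5, 2, 5)%nat; (5, 3, 4)%nat; (5, 4, 3)%nat; (5, 5, 2)%nat].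

Definition W2 : seq (seq ZI) := [:: [:: (1, 0)%Z; (0, 0)%Z; (0, 0)%Z; (0, 0)%Z; (0, 0)%Z; (0, 0)%Z; (0, 0)%Z; (0, 0)%Z; (0, 0)%Z; (0, 0)%Z; (0, 0)%Z; (0, 0)%Z; (0, 0)%Z; (0, 0)%Z; (0, 0)%Z; (0, 0)%Z; (0, 0)%Z; (0, 0)%Z; (0, 0)%Z; (0, 0)%Z; (0, 0)%Z; (0, 0)%Z; (0, 0)%Z; (0, 0)%Z; (0, 0)%Z; (0, 0)%Z; (0, 0)%Z; (0, 0)%Z; (0, 0)%Z; (0, 0)%Z; (0, 0)%Z; (0, 0)%Z; (0, 0)%Z; (0, 0)%Z; (0, 0)%Z; (0, 0)%Z; (0, 0)%Z; (0, 0)%Z; (0, 0)%Z; (0, 0)%Z; (0, 0)%Z; (0, 0)%Z; (0, 0)%Z; (0, 0)%Z; (0, 0)%Z];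
  [:: (2, 2)%Z; (1, 0)%Z; (0, 0)%Z; (0, 0)%Z; (0, 0)%Z; (0, 0)%Z; (0, 0)%Z; (0, 0)%Z; (0, 0)%Z; (0, 0)%Z; (0, 0)%Z; (0, 0)%Z; (0, 0)%Z; (0, 0)%Z; (0, 0)%Z; (0, 0)%Z; (0, 0)%Z; (0, 0)%Z; (0, 0)%Z; (0, 0)%Z; (0, 0)%Z; (0, 0)%Z; (0, 0)%Z; (0, 0)%Z; (0, 0)%Z; (0, 0)%Z; (0, 0)%Z; (0, 0)%Z; (0, 0)%Z; (0, 0)%Z; (0, 0)%Z; (0, 0)%Z; (0, 0)%Z; (0, 0)%Z; (0, 0)%Z; (0, 0)%Z; (0, 0)%Z; (0, 0)%Z; (0, 0)%Z; (0, 0)%Z; (0, 0)%Z; (0, 0)%Z; (0, 0)%Z; (0, 0)%Z; (0, 0)%Z];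
  [:: (0, 4)%Z; (2, 2)%Z; (1, 0)%Z; (0, 0)%Z; (0, 0)%Z; (0, 0)%Z; (0, 0)%Z; (0, 0)%Z; (0, 0)%Z; (0, 0)%Z; (0, 0)%Z; (0, 0)%Z; (0, 0)%Z; (0, 0)%Z; (0, 0)%Z; (0, 0)%Z; (0, 0)%Z; (0, 0)%Z; (0, 0)%Z; (0, 0)%Z; (0, 0)%Z; (0, 0)%Z; (0, 0)%Z; (0, 0)%Z; (0, 0)%Z; (0, 0)%Z; (0, 0)%Z; (0, 0)%Z; (0, 0)%Z; (0, 0)%Z; (0, 0)%Z; (0, 0)%Z; (0, 0)%Z; (0, 0)%Z; (0, 0)%Z; (0, 0)%Z; (0, 0)%Z; (0, 0)%Z; (0, 0)%Z; (0, 0)%Z; (0, 0)%Z; (0, 0)%Z; (0, 0)%Z; (0, 0)%Z; (0, 0)%Z];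
  [:: (-2, 2)%Z; (0, 4)%Z; (2, 2)%Z; (1, 0)%Z; (0, 0)%Z; (0, 0)%Z; (0, 0)%Z; (0, 0)%Z; (0, 0)%Z; (0, 0)%Z; (0, 0)%Z; (0, 0)%Z; (0, 0)%Z; (0, 0)%Z; (0, 0)%Z; (0, 0)%Z; (0, 0)%Z; (0, 0)%Z; (0, 0)%Z; (0, 0)%Z; (0, 0)%Z; (0, 0)%Z; (0, 0)%Z; (0, 0)%Z; (0, 0)%Z; (0, 0)%Z; (0, 0)%Z; (0, 0)%Z; (0, 0)%Z; (0, 0)%Z; (0, 0)%Z; (0, 0)%Z; (0, 0)%Z; (0, 0)%Z; (0, 0)%Z; (0, 0)%Z; (0, 0)%Z; (0, 0)%Z; (0, 0)%Z; (0, 0)%Z; (0, 0)%Z; (0, 0)%Z; (0, 0)%Z; (0, 0)%Z; (0, 0)%Z];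
  [:: (1, 0)%Z; (-2, 2)%Z; (0, 4)%Z; (2, 2)%Z; (1, 0)%Z; (0, 0)%Z; (0, 0)%Z; (0, 0)%Z; (0, 0)%Z; (0, 0)%Z; (0, 0)%Z; (0, 0)%Z; (0, 0)%Z; (0, 0)%Z; (0, 0)%Z; (0, 0)%Z; (0, 0)%Z; (0, 0)%Z; (0, 0)%Z; (0, 0)%Z; (0, 0)%Z; (0, 0)%Z; (0, 0)%Z; (0, 0)%Z; (0, 0)%Z; (0, 0)%Z; (0, 0)%Z; (0, 0)%Z; (0, 0)%Z; (0, 0)%Z; (0, 0)%Z; (0, 0)%Z; (0, 0)%Z; (0, 0)%Z; (0, 0)%Z; (0, 0)%Z; (0, 0)%Z; (0, 0)%Z; (0, 0)%Z; (0, 0)%Z; (0, 0)%Z; (0, 0)%Z; (0, 0)%Z; (0, 0)%Z; (0, 0)%Z];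
  [:: (484792, 38736)%Z; (198172, 15816)%Z; (127524, 139632)%Z; (149508, 78864)%Z; (64860, -5040)%Z; (27752, -11704)%Z; (62488, -54216)%Z; (31023, -98421)%Z; (-3687, -59361)%Z; (21684, -20928)%Z; (39972, -32664)%Z; (15819, -36693)%Z; (-1995, -10545)%Z; (24928, -20736)%Z; (-3936, -7488)%Z; (-10320, 8160)%Z; (-1680, 9240)%Z; (-1392, -1776)%Z; (-10800, -4200)%Z; (-10032, 2304)%Z; (-43316, 312)%Z; (-13956, -1848)%Z; (-6252, -7536)%Z; (-4860, -8400)%Z; (-4644, -8232)%Z; (-5316, -7848)%Z; (-6828, -5904)%Z; (-6780, -1680)%Z; (-3300, -2520)%Z; (-22452, -20136)%Z; (11232, 3396)%Z; (2976, 1668)%Z; (576, 3228)%Z; (672, 3516)%Z; (768, 3684)%Z; (1824, 3612)%Z; (2400, 1500)%Z; (192, 36)%Z; (5280, 2820)%Z; (-1392, -576)%Z; (-240, -480)%Z; (0, -480)%Z; (336, -672)%Z; (96, -1152)%Z; (-528, -864)%Z];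
  [:: (1683840, 12872)%Z; (578208, -38652)%Z; (368312, 382668)%Z; (434968, 188044)%Z; (168648, -35084)%Z; (183480, -23608)%Z; (333448, -223816)%Z; (96717, -376173)%Z; (-87579, -158535)%Z; (36712, 11388)%Z; (120784, -68900)%Z; (17701, -111609)%Z; (-37043, -26611)%Z; (-22464, -104160)%Z; (-75136, -61088)%Z; (-47552, 3376)%Z; (24216, -7168)%Z; (27056, -73200)%Z; (-30632, -78304)%Z; (-39136, -22064)%Z; (-106768, 26628)%Z; (480, 21684)%Z; (-20488, -7188)%Z; (-40840, -5060)%Z; (-49488, 5620)%Z; (-49104, 17556)%Z; (-40552, 24108)%Z; (-25864, 18172)%Z; (-16704, -17708)%Z; (-104496, -36284)%Z; (27060, 1992)%Z; (-5388, -8280)%Z; (10668, 7512)%Z; (22284, 1560)%Z; (22932, -6168)%Z; (20460, -12456)%Z; (9900, -14280)%Z; (1236, 3144)%Z; (29172, -1656)%Z; (480, 48)%Z; (960, 2160)%Z; (-3552, -1344)%Z; (-5760, 816)%Z; (-4800, 2976)%Z; (-2688, 3216)%Z];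
  [:: (-1064384, -1021384)%Z; (-405312, -348580)%Z; (-46680, -480652)%Z; (-195064, -369452)%Z; (-134248, -68596)%Z; (-146104, -103304)%Z; (-356744, -61112)%Z; (-289973, 187525)%Z; (-35517, 160287)%Z; (-13320, -25692)%Z; (-119088, -24892)%Z; (-80429, 66225)%Z; (6843, 43691)%Z; (-50112, 91872)%Z; (9088, 87584)%Z; (26752, 24944)%Z; (-27416, -11072)%Z; (-67952, 31152)%Z; (-31448, 69664)%Z; (10400, 38096)%Z; (89040, 43468)%Z; (14112, -18788)%Z; (10312, 17860)%Z; (26440, 30900)%Z; (39696, 28764)%Z; (46416, 19900)%Z; (44008, 10180)%Z; (29704, 4788)%Z; (384, 22908)%Z; (49840, 88716)%Z; (-17844, -15624)%Z; (-2484, 10104)%Z; (-3180, -11928)%Z; (-14988, -15672)%Z; (-20628, -10920)%Z; (-23148, -4728)%Z; (-16620, 3720)%Z; (1260, -2856)%Z; (-21492, -16584)%Z; (-96, -816)%Z; (960, -2160)%Z; (1632, 3264)%Z; (4608, 3408)%Z; (5568, 1248)%Z; (4224, -528)%Z];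
  [:: (-379976, 871664)%Z; (-118788, 312280)%Z; (-304700, 92192)%Z; (-228476, 180672)%Z; (-34692, 103776)%Z; (-10936, 83624)%Z; (61304, 197592)%Z; (174163, 128775)%Z; (100797, 9043)%Z; (-6540, 40432)%Z; (14788, 95832)%Z; (54319, 48695)%Z; (21017, -5101)%Z; (31072, 23808)%Z; (28192, -21184)%Z; (528, -28384)%Z; (-3504, 792)%Z; (26512, 10128)%Z; (37168, -14824)%Z; (12720, -22336)%Z; (18300, -62328)%Z; (3948, -7272)%Z; (12228, -5760)%Z; (10740, -11040)%Z; (6924, -13464)%Z; (3564, -14040)%Z; (1092, -13920)%Z; (-204, -11808)%Z; (9996, -5448)%Z; (44540, -35736)%Z; (-10416, 14244)%Z; (-336, -924)%Z; (-5040, 1788)%Z; (-3312, 5532)%Z; (-912, 5700)%Z; (528, 5628)%Z; (2160, 3900)%Z; (-1200, 516)%Z; (-4848, 11364)%Z; (1296, -384)%Z; (-240, 480)%Z; (768, -864)%Z; (-48, -1248)%Z; (-288, -768)%Z; (-144, -672)%Z];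
  [:: (3364440, -1028672)%Z; (1217852, -391248)%Z; (1100948, 637672)%Z; (1138772, 159496)%Z; (389772, -189576)%Z; (272280, -139752)%Z; (400152, -590824)%Z; (-51407, -776487)%Z; (-230101, -329975)%Z; (82628, -105608)%Z; (185396, -273520)%Z; (-17411, -260191)%Z; (-66537, -44319)%Z; (-4256, -189760)%Z; (-110144, -51552)%Z; (-66448, 63584)%Z; (30304, 25368)%Z; (1584, -79760)%Z; (-92448, -67336)%Z; (-75184, 10304)%Z; (-226212, 98112)%Z; (-40020, 28336)%Z; (-55212, -23192)%Z; (-71100, -18200)%Z; (-75412, -4160)%Z; (-73716, 10624)%Z; (-66028, 24712)%Z; (-46076, 29928)%Z; (-34356, -18352)%Z; (-228644, -42016)%Z; (65800, -6252)%Z; (3368, -3820)%Z; (19672, 15948)%Z; (30616, 6380)%Z; (29288, -1292)%Z; (28760, -8884)%Z; (16120, -16180)%Z; (2184, 3316)%Z; (52808, -9004)%Z; (-5040, -608)%Z; (400, 640)%Z; (-4928, -2016)%Z; (-5680, 64)%Z; (-5280, 704)%Z; (-4752, 1984)%Z];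
  [:: (-50176, -1052712)%Z; (-30252, -360544)%Z; (274844, -260472)%Z; (131180, -321480)%Z; (-30036, -126752)%Z; (-12936, -95432)%Z; (-132500, -172500)%Z; (-229573, -43641)%Z; (-109271, 55663)%Z; (-13916, -19072)%Z; (-57224, -65748)%Z; (-71769, -6393)%Z; (-14619, 20207)%Z; (-65056, -5632)%Z; (-31720, 33080)%Z; (11224, 23688)%Z; (8608, -15544)%Z; (-29936, -18192)%Z; (-36616, 15168)%Z; (-8392, 21416)%Z; (14484, 80368)%Z; (13588, 8736)%Z; (-9188, 14344)%Z; (-10660, 24680)%Z; (-5052, 29936)%Z; (2356, 30672)%Z; (8668, 26536)%Z; (9308, 16616)%Z; (-10012, 7776)%Z; (-23132, 70256)%Z; (1864, -21252)%Z; (-4712, 76)%Z; (6456, -5628)%Z; (4616, -12268)%Z; (552, -13476)%Z; (-3512, -13004)%Z; (-6440, -7100)%Z; (1912, 44)%Z; (-504, -17988)%Z; (176, 992)%Z; (880, 0)%Z; (-1216, 1888)%Z; (-528, 2944)%Z; (352, 2944)%Z; (1040, 2240)%Z];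
  [:: (-3001640, 867264)%Z; (-1146084, 381616)%Z; (-1010796, -500824)%Z; (-1008524, -93432)%Z; (-335924, 183032)%Z; (-190120, 108184)%Z; (-338664, 454808)%Z; (20129, 653289)%Z; (200987, 300185)%Z; (-40796, 88376)%Z; (-143212, 206160)%Z; (4557, 199537)%Z; (43559, 34353)%Z; (-12448, 184640)%Z; (88128, 62624)%Z; (55696, -48608)%Z; (-34848, -23656)%Z; (-15888, 72880)%Z; (72416, 68472)%Z; (65648, -3328)%Z; (217004, -113184)%Z; (39420, -36592)%Z; (52804, 15944)%Z; (67700, 13640)%Z; (71484, 1760)%Z; (69852, -11168)%Z; (62276, -24024)%Z; (43252, -29176)%Z; (30492, 12784)%Z; (186668, 21312)%Z; (-66520, 14164)%Z; (-5336, 7060)%Z; (-19144, -13236)%Z; (-29032, -5460)%Z; (-27896, 1204)%Z; (-27560, 7948)%Z; (-16040, 15180)%Z; (-2168, -1292)%Z; (-39576, 10388)%Z; (5200, -864)%Z; (400, -640)%Z; (4416, 1952)%Z; (5200, 832)%Z; (5600, 192)%Z; (5104, -1728)%Z];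
  [:: (354312, -1733280)%Z; (163748, -602048)%Z; (625268, -326432)%Z; (393724, -499368)%Z; (15676, -240528)%Z; (-33768, -148520)%Z; (-194656, -290848)%Z; (-357153, -145597)%Z; (-197895, 18679)%Z; (-37492, -71032)%Z; (-89980, -145064)%Z; (-119789, -47381)%Z; (-28931, 19103)%Z; (-55680, -56416)%Z; (-34128, 29136)%Z; (20456, 42632)%Z; (26032, -5416)%Z; (-25520, -17296)%Z; (-43744, 25192)%Z; (-9624, 35336)%Z; (-32832, 153668)%Z; (-6896, 29700)%Z; (-28368, 19348)%Z; (-29600, 26180)%Z; (-24880, 31588)%Z; (-17264, 34644)%Z; (-7952, 34452)%Z; (1152, 26564)%Z; (-15728, 8884)%Z; (-74144, 98196)%Z; (28952, -43540)%Z; (1200, -4332)%Z; (13112, -4508)%Z; (12480, -11684)%Z; (8792, -13332)%Z; (5024, -15140)%Z; (-2120, -11260)%Z; (2064, 564)%Z; (8024, -26452)%Z; (-6192, 3200)%Z; (80, 480)%Z; (-2304, 1632)%Z; (-2064, 2240)%Z; (-1984, 2720)%Z; (-784, 3168)%Z];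
  [:: (-1181304, -54208)%Z; (-522668, 9904)%Z; (-306924, -291728)%Z; (-349780, -179480)%Z; (-155204, 12032)%Z; (-66664, 51192)%Z; (-127200, 157600)%Z; (-50597, 252071)%Z; (25941, 157267)%Z; (-37284, 72472)%Z; (-72556, 104328)%Z; (-7521, 101183)%Z; (22409, 22763)%Z; (-61824, 55392)%Z; (7600, 19600)%Z; (21496, -23928)%Z; (-3888, -31976)%Z; (-11664, -3888)%Z; (10816, 9832)%Z; (17272, -1976)%Z; (142376, 4932)%Z; (34872, -6876)%Z; (18568, 21076)%Z; (22040, 27140)%Z; (26232, 24804)%Z; (28984, 18868)%Z; (28712, 10164)%Z; (22232, -796)%Z; (7992, 4724)%Z; (73032, 49524)%Z; (-46664, -12628)%Z; (-5888, 2004)%Z; (-3496, -12732)%Z; (-9616, -12932)%Z; (-10952, -9684)%Z; (-12208, -6596)%Z; (-9000, -220)%Z; (608, 116)%Z; (-18696, -5012)%Z; (6224, 3008)%Z; (80, -480)%Z; (576, 3232)%Z; (1968, 2816)%Z; (2048, 2336)%Z; (2480, 1760)%Z];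
  [:: (-6848456, -522848)%Z; (-2328596, -386688)%Z; (-1313132, -2450136)%Z; (-1979804, -1563592)%Z; (-949140, -83240)%Z; (-631176, 334072)%Z; (-981464, 1185128)%Z; (-307119, 1607513)%Z; (126331, 747033)%Z; (-421932, 179944)%Z; (-642156, 494992)%Z; (-132627, 550609)%Z; (124375, 101505)%Z; (-206944, 71168)%Z; (168928, -15296)%Z; (219680, -168720)%Z; (60960, -108200)%Z; (60976, 104048)%Z; (201920, 131800)%Z; (168896, 848)%Z; (717988, 233784)%Z; (89908, 118664)%Z; (37356, 155728)%Z; (50140, 124400)%Z; (69812, 90296)%Z; (91028, 52824)%Z; (101804, 16432)%Z; (87900, -13840)%Z; (48020, 46280)%Z; (419556, 277048)%Z; (-174696, -203708)%Z; (19752, -33964)%Z; (17192, -67204)%Z; (-15496, -53108)%Z; (-28104, -33692)%Z; (-40712, -15636)%Z; (-31480, 7740)%Z; (1544, -5388)%Z; (-110120, -19580)%Z; (-2224, 43808)%Z; (-11120, 0)%Z; (-8000, 10400)%Z; (-1008, 9856)%Z; (3232, 9856)%Z; (10224, 5952)%Z];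
  [:: (-2, 0)%Z; (0, 0)%Z; (0, 0)%Z; (0, 0)%Z; (0, 0)%Z; (1, 0)%Z; (0, 0)%Z; (0, 0)%Z; (0, 0)%Z; (0, 0)%Z; (0, 0)%Z; (0, 0)%Z; (0, 0)%Z; (0, 0)%Z; (0, 0)%Z; (0, 0)%Z; (0, 0)%Z; (0, 0)%Z; (0, 0)%Z; (0, 0)%Z; (0, 0)%Z; (0, 0)%Z; (0, 0)%Z; (0, 0)%Z; (0, 0)%Z; (0, 0)%Z; (0, 0)%Z; (0, 0)%Z; (0, 0)%Z; (0, 0)%Z; (0, 0)%Z; (0, 0)%Z; (0, 0)%Z; (0, 0)%Z; (0, 0)%Z; (0, 0)%Z; (0, 0)%Z; (0, 0)%Z; (0, 0)%Z; (0, 0)%Z; (0, 0)%Z; (0, 0)%Z; (0, 0)%Z; (0, 0)%Z; (0, 0)%Z];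
  [:: (484792, 27216)%Z; (192412, 15816)%Z; (127524, 139632)%Z; (149508, 78864)%Z; (64860, -5040)%Z; (30632, -8824)%Z; (65368, -54216)%Z; (31023, -98421)%Z; (-3687, -59361)%Z; (21684, -20928)%Z; (39972, -32664)%Z; (15819, -36693)%Z; (-1995, -10545)%Z; (22048, -20736)%Z; (-3936, -7488)%Z; (-10320, 8160)%Z; (-1680, 9240)%Z; (-1392, -1776)%Z; (-10800, -4200)%Z; (-10032, 2304)%Z; (-37556, 312)%Z; (-13956, -1848)%Z; (-6252, -7536)%Z; (-4860, -8400)%Z; (-4644, -8232)%Z; (-5316, -7848)%Z; (-6828, -5904)%Z; (-6780, -1680)%Z; (-3300, -2520)%Z; (-22452, -20136)%Z; (11232, 3396)%Z; (2976, 1668)%Z; (576, 3228)%Z; (672, 3516)%Z; (768, 3684)%Z; (1824, 3612)%Z; (2400, 1500)%Z; (192, 36)%Z; (5280, 2820)%Z; (-1392, -576)%Z; (-240, -480)%Z; (0, -480)%Z; (336, -672)%Z; (96, -1152)%Z; (-528, -864)%Z];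
  [:: (-2929368, -1619456)%Z; (-1094556, -630192)%Z; (-325268, -1181256)%Z; (-636340, -868360)%Z; (-374028, -143896)%Z; (-281688, -38936)%Z; (-661720, 176680)%Z; (-477129, 555327)%Z; (-81603, 340479)%Z; (-158308, -12216)%Z; (-328852, 42416)%Z; (-172597, 167031)%Z; (9713, 62311)%Z; (-112608, 87744)%Z; (55360, 90080)%Z; (97712, 3584)%Z; (8544, -17432)%Z; (-30128, 76944)%Z; (45152, 119944)%Z; (72784, 45728)%Z; (224692, 91344)%Z; (34404, 27168)%Z; (16156, 49992)%Z; (29740, 45320)%Z; (37284, 33488)%Z; (40068, 23376)%Z; (42844, 15528)%Z; (40684, 7688)%Z; (17604, 35648)%Z; (110004, 161648)%Z; (-50568, -45876)%Z; (1464, -5652)%Z; (-2712, -18924)%Z; (-13752, -14124)%Z; (-14184, -7188)%Z; (-15096, -3852)%Z; (-12600, 2580)%Z; (-1704, -3828)%Z; (-36552, -22644)%Z; (1968, 5856)%Z; (-1680, 0)%Z; (2112, 2784)%Z; (2736, 192)%Z; (1056, 192)%Z; (1680, 960)%Z];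
  [:: (234284, 596020)%Z; (85866, 221134)%Z; (-94494, 208126)%Z; (-10862, 200654)%Z; (37222, 64234)%Z; (39304, 42560)%Z; (121868, 59444)%Z; (140489, -22054)%Z; (52860, -41757)%Z; (18666, 20166)%Z; (51210, 34102)%Z; (45047, -3972)%Z; (6018, -11459)%Z; (26640, -3312)%Z; (3464, -22808)%Z; (-12688, -13376)%Z; (-1036, 1988)%Z; (17360, -7392)%Z; (11132, -23956)%Z; (-3728, -16448)%Z; (-22134, -40114)%Z; (-1782, -5650)%Z; (3194, -9034)%Z; (-190, -11010)%Z; (-3390, -10314)%Z; (-5358, -8842)%Z; (-6454, -7546)%Z; (-6046, -5922)%Z; (2154, -7842)%Z; (2042, -37938)%Z; (1914, 12330)%Z; (-630, -294)%Z; (-1626, 3414)%Z; (1110, 4422)%Z; (2394, 3306)%Z; (3078, 2550)%Z; (3030, 870)%Z; (-342, 858)%Z; (3258, 8106)%Z; (456, -840)%Z; (120, 360)%Z; (-48, -816)%Z; (-648, -600)%Z; (-528, -240)%Z; (-408, -264)%Z];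
  [:: (364616, -833264)%Z; (153348, -316120)%Z; (312380, -134432)%Z; (207356, -203712)%Z; (23172, -103776)%Z; (6136, -79784)%Z; (-57464, -186072)%Z; (-163603, -125895)%Z; (-97917, -12883)%Z; (3660, -38512)%Z; (-12868, -90072)%Z; (-49519, -47735)%Z; (-20057, 3181)%Z; (-29152, -23808)%Z; (-26272, 19264)%Z; (-528, 26464)%Z; (3504, -792)%Z; (-24592, -10128)%Z; (-35248, 12904)%Z; (-12720, 20416)%Z; (-18300, 62328)%Z; (-3948, 7272)%Z; (-12228, 5760)%Z; (-10740, 11040)%Z; (-6924, 13464)%Z; (-3564, 14040)%Z; (-1092, 13920)%Z; (204, 11808)%Z; (-9996, 5448)%Z; (-40700, 35736)%Z; (10416, -14244)%Z; (336, 924)%Z; (5040, -1788)%Z; (3312, -5532)%Z; (912, -5700)%Z; (-528, -5628)%Z; (-2160, -3900)%Z; (1200, -516)%Z; (4848, -11364)%Z; (-1296, 384)%Z; (240, -480)%Z; (-768, 864)%Z; (48, 1248)%Z; (288, 768)%Z; (144, 672)%Z];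
  [:: (2, -2)%Z; (0, 0)%Z; (0, 0)%Z; (0, 0)%Z; (0, 0)%Z; (-1, 1)%Z; (0, 0)%Z; (0, 0)%Z; (0, 0)%Z; (0, 0)%Z; (0, 0)%Z; (0, 0)%Z; (0, 0)%Z; (0, 0)%Z; (0, 0)%Z; (0, 0)%Z; (0, 0)%Z; (0, 0)%Z; (0, 0)%Z; (0, 0)%Z; (1, 0)%Z; (0, 0)%Z; (0, 0)%Z; (0, 0)%Z; (0, 0)%Z; (0, 0)%Z; (0, 0)%Z; (0, 0)%Z; (0, 0)%Z; (0, 0)%Z; (0, 0)%Z; (0, 0)%Z; (0, 0)%Z; (0, 0)%Z; (0, 0)%Z; (0, 0)%Z; (0, 0)%Z; (0, 0)%Z; (0, 0)%Z; (0, 0)%Z; (0, 0)%Z; (0, 0)%Z; (0, 0)%Z; (0, 0)%Z; (0, 0)%Z];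
  [:: (-1466304, -1313896)%Z; (-499280, -466308)%Z; (25288, -654460)%Z; (-183752, -542476)%Z; (-160776, -131652)%Z; (-201144, -71496)%Z; (-475752, 16744)%Z; (-363865, 265593)%Z; (-68273, 163787)%Z; (-74552, -70300)%Z; (-192512, -46652)%Z; (-112705, 65029)%Z; (8631, 35607)%Z; (-24448, 53152)%Z; (50624, 80352)%Z; (63184, 30208)%Z; (-4792, 11136)%Z; (-41328, 71792)%Z; (6984, 104608)%Z; (37936, 50080)%Z; (88728, 73860)%Z; (-6168, 6068)%Z; (960, 20588)%Z; (20160, 18620)%Z; (30424, 9044)%Z; (32280, -556)%Z; (28960, -3988)%Z; (23168, 636)%Z; (8328, 26356)%Z; (45176, 96100)%Z; (-13684, -28056)%Z; (7804, 3544)%Z; (-2188, -9000)%Z; (-13852, -5432)%Z; (-15380, 1928)%Z; (-13628, 6088)%Z; (-8140, 7480)%Z; (-996, -3400)%Z; (-21044, -14168)%Z; (-2016, 2576)%Z; (-1600, -1840)%Z; (2144, 1728)%Z; (4288, -688)%Z; (2688, -2528)%Z; (1152, -1744)%Z];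
  [:: (-747200, 2329848)%Z; (-279888, 824572)%Z; (-774032, 330492)%Z; (-532088, 516996)%Z; (-63168, 265364)%Z; (33240, 256328)%Z; (259232, 499056)%Z; (479563, 261873)%Z; (227399, -5665)%Z; (-22792, 118132)%Z; (61736, 233580)%Z; (138819, 87069)%Z; (36543, -29669)%Z; (76384, 14080)%Z; (62416, -84752)%Z; (-88, -79416)%Z; (8504, -272)%Z; (89744, 11280)%Z; (104392, -55776)%Z; (33256, -64376)%Z; (36708, -152968)%Z; (7700, -3624)%Z; (26228, -14152)%Z; (16660, -33800)%Z; (1668, -40280)%Z; (-9436, -38376)%Z; (-13228, -34408)%Z; (-9356, -29192)%Z; (24724, -20952)%Z; (89636, -108536)%Z; (-24100, 34248)%Z; (548, -7840)%Z; (-10668, 6888)%Z; (-2324, 18160)%Z; (6108, 16968)%Z; (10220, 14096)%Z; (11060, 7400)%Z; (-3196, 2176)%Z; (-6372, 32136)%Z; (3520, 112)%Z; (-1120, 2160)%Z; (1312, -3136)%Z; (-1920, -4336)%Z; (-3040, -2176)%Z; (-1952, -1136)%Z];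
  [:: (1258616, -458736)%Z; (429900, -166888)%Z; (399228, 244840)%Z; (423908, 66864)%Z; (146804, -67352)%Z; (85336, -71656)%Z; (125328, -245456)%Z; (-41465, -288537)%Z; (-84083, -108473)%Z; (43988, -37280)%Z; (72268, -105072)%Z; (-7725, -91081)%Z; (-22199, -9513)%Z; (-2048, -53408)%Z; (-45936, -7568)%Z; (-29176, 27608)%Z; (3168, 5416)%Z; (-14928, -33328)%Z; (-49616, -21672)%Z; (-34424, 8920)%Z; (-83432, 41220)%Z; (-12888, 3268)%Z; (-18040, -7292)%Z; (-21320, -1100)%Z; (-19896, 4804)%Z; (-17400, 8564)%Z; (-15320, 11172)%Z; (-12232, 11476)%Z; (-15192, -3724)%Z; (-79304, -7020)%Z; (25456, -3196)%Z; (104, 1244)%Z; (6592, 3660)%Z; (8488, -1452)%Z; (6320, -3772)%Z; (5192, -4972)%Z; (2240, -5460)%Z; (1544, 380)%Z; (16176, -5948)%Z; (-1936, -864)%Z; (560, -320)%Z; (-1536, -32)%Z; (-1072, 992)%Z; (-512, 672)%Z; (-688, 576)%Z];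
  [:: (0, 4)%Z; (0, 0)%Z; (0, 0)%Z; (0, 0)%Z; (0, 0)%Z; (0, -2)%Z; (0, 0)%Z; (0, 0)%Z; (0, 0)%Z; (0, 0)%Z; (0, 0)%Z; (0, 0)%Z; (0, 0)%Z; (0, 0)%Z; (0, 0)%Z; (0, 0)%Z; (0, 0)%Z; (0, 0)%Z; (0, 0)%Z; (0, 0)%Z; (-2, 2)%Z; (0, 0)%Z; (0, 0)%Z; (0, 0)%Z; (0, 0)%Z; (0, 0)%Z; (0, 0)%Z; (0, 0)%Z; (0, 0)%Z; (0, 0)%Z; (1, 0)%Z; (0, 0)%Z; (0, 0)%Z; (0, 0)%Z; (0, 0)%Z; (0, 0)%Z; (0, 0)%Z; (0, 0)%Z; (0, 0)%Z; (0, 0)%Z; (0, 0)%Z; (0, 0)%Z; (0, 0)%Z; (0, 0)%Z; (0, 0)%Z];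
  [:: (-1825488, 477048)%Z; (-658600, 141244)%Z; (-573424, -377660)%Z; (-579824, -110172)%Z; (-196112, 81276)%Z; (-176328, 113128)%Z; (-244984, 373208)%Z; (22125, 435191)%Z; (109689, 145489)%Z; (-83104, 19220)%Z; (-135304, 126916)%Z; (-7955, 126643)%Z; (31657, 15629)%Z; (21504, 67424)%Z; (82368, 11424)%Z; (47168, -32464)%Z; (-8024, 10352)%Z; (21424, 76304)%Z; (80168, 56656)%Z; (58272, -880)%Z; (134136, -47860)%Z; (2824, 1116)%Z; (23040, 12436)%Z; (35200, -4060)%Z; (33368, -19172)%Z; (25720, -27492)%Z; (18400, -27756)%Z; (14976, -19228)%Z; (25096, 10972)%Z; (107512, 13740)%Z; (-37828, -1312)%Z; (7068, -1632)%Z; (-10396, -5120)%Z; (-16284, 6496)%Z; (-11620, 13056)%Z; (-7036, 15136)%Z; (-860, 12320)%Z; (-3012, -1920)%Z; (-25348, 8864)%Z; (1728, 2192)%Z; (-2080, -240)%Z; (3168, -384)%Z; (2976, -3376)%Z; (896, -3616)%Z; (224, -2448)%Z];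
  [:: (3428712, 1692880)%Z; (1416308, 631592)%Z; (505788, 1222448)%Z; (764524, 888512)%Z; (421796, 131632)%Z; (314872, 2520)%Z; (722424, -228328)%Z; (528977, -652187)%Z; (88935, -424591)%Z; (165948, -29872)%Z; (354460, -78984)%Z; (184101, -206891)%Z; (-14501, -78287)%Z; (132960, -113856)%Z; (-57088, -104224)%Z; (-106624, 1392)%Z; (-6768, 32744)%Z; (42480, -70416)%Z; (-38704, -124408)%Z; (-74464, -48304)%Z; (-282212, -110592)%Z; (-49236, -16560)%Z; (-24028, -58792)%Z; (-41420, -60200)%Z; (-52980, -48672)%Z; (-59284, -35776)%Z; (-62492, -22728)%Z; (-56588, -8936)%Z; (-22068, -35696)%Z; (-129444, -187584)%Z; (66512, 53260)%Z; (3200, 1308)%Z; (3952, 25332)%Z; (19360, 22916)%Z; (21872, 14508)%Z; (24544, 9380)%Z; (20880, -2060)%Z; (1504, 3004)%Z; (42384, 28748)%Z; (-4112, -6080)%Z; (880, 480)%Z; (-2304, -4768)%Z; (-3984, -2720)%Z; (-3104, -2240)%Z; (-3824, -1952)%Z];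
  [:: (-2, -2)%Z; (0, 0)%Z; (0, 0)%Z; (0, 0)%Z; (0, 0)%Z; (1, 1)%Z; (0, 0)%Z; (0, 0)%Z; (0, 0)%Z; (0, 0)%Z; (0, 0)%Z; (0, 0)%Z; (0, 0)%Z; (0, 0)%Z; (0, 0)%Z; (0, 0)%Z; (0, 0)%Z; (0, 0)%Z; (0, 0)%Z; (0, 0)%Z; (0, -4)%Z; (0, 0)%Z; (0, 0)%Z; (0, 0)%Z; (0, 0)%Z; (0, 0)%Z; (0, 0)%Z; (0, 0)%Z; (0, 0)%Z; (0, 0)%Z; (-2, 2)%Z; (0, 0)%Z; (0, 0)%Z; (0, 0)%Z; (0, 0)%Z; (0, 0)%Z; (0, 0)%Z; (0, 0)%Z; (0, 0)%Z; (1, 0)%Z; (0, 0)%Z; (0, 0)%Z; (0, 0)%Z; (0, 0)%Z; (0, 0)%Z];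
  [:: (347816, 815840)%Z; (115844, 319296)%Z; (-139876, 355224)%Z; (13292, 336616)%Z; (76068, 102056)%Z; (47976, 55400)%Z; (143192, 60376)%Z; (178851, -48341)%Z; (76625, -71493)%Z; (40764, 8504)%Z; (82140, 22928)%Z; (63543, -22573)%Z; (6437, -18381)%Z; (68320, 5632)%Z; (18656, -17152)%Z; (-15872, -4944)%Z; (-8544, 16712)%Z; (15440, 7312)%Z; (11968, -16504)%Z; (-4832, -14192)%Z; (-67876, -71496)%Z; (-16948, -17240)%Z; (4116, -21856)%Z; (5540, -25280)%Z; (2380, -25736)%Z; (-2132, -24168)%Z; (-5996, -20224)%Z; (-6684, -12608)%Z; (6316, -9368)%Z; (348, -65992)%Z; (17736, 30860)%Z; (1560, 3484)%Z; (-6344, 9076)%Z; (-3320, 11588)%Z; (-984, 10604)%Z; (1352, 10020)%Z; (3160, 5940)%Z; (-1928, 1212)%Z; (4232, 14924)%Z; (-1616, -5600)%Z; (560, 0)%Z; (2048, -2144)%Z; (1008, -2560)%Z; (608, -2560)%Z; (-432, -2496)%Z];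
  [:: (21304, 3976)%Z; (5710, 2178)%Z; (2602, 9170)%Z; (5902, 6146)%Z; (3106, 602)%Z; (2284, -444)%Z; (3962, -3074)%Z; (1720, -4843)%Z; (-197, -2212)%Z; (1322, -110)%Z; (2212, -1028)%Z; (690, -1469)%Z; (-271, -282)%Z; (368, -192)%Z; (-724, -52)%Z; (-824, 452)%Z; (-188, 284)%Z; (-112, -472)%Z; (-624, -608)%Z; (-576, -100)%Z; (-1818, -820)%Z; (-22, -448)%Z; (10, -508)%Z; (-90, -380)%Z; (-174, -264)%Z; (-250, -144)%Z; (-290, -32)%Z; (-238, 44)%Z; (-98, -196)%Z; (-1246, -920)%Z; (294, 646)%Z; (-174, 126)%Z; (-102, 210)%Z; (22, 162)%Z; (70, 102)%Z; (118, 42)%Z; (90, -30)%Z; (-14, 30)%Z; (334, 78)%Z; (76, -116)%Z; (60, 0)%Z; (36, -28)%Z; (12, -32)%Z; (-8, -32)%Z; (-32, -16)%Z];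
  [:: (-494392, -32976)%Z; (-196252, -15816)%Z; (-127524, -139632)%Z; (-149508, -78864)%Z; (-64860, 5040)%Z; (-26792, 12664)%Z; (-63448, 54216)%Z; (-31023, 98421)%Z; (3687, 59361)%Z; (-21684, 20928)%Z; (-39972, 32664)%Z; (-15819, 36693)%Z; (1995, 10545)%Z; (-23008, 20736)%Z; (3936, 7488)%Z; (10320, -8160)%Z; (1680, -9240)%Z; (1392, 1776)%Z; (10800, 4200)%Z; (10032, -2304)%Z; (39476, -312)%Z; (13956, 1848)%Z; (6252, 7536)%Z; (4860, 8400)%Z; (4644, 8232)%Z; (5316, 7848)%Z; (6828, 5904)%Z; (6780, 1680)%Z; (3300, 2520)%Z; (22452, 20136)%Z; (-11232, -3396)%Z; (-2976, -1668)%Z; (-576, -3228)%Z; (-672, -3516)%Z; (-768, -3684)%Z; (-1824, -3612)%Z; (-2400, -1500)%Z; (-192, -36)%Z; (-5280, -2820)%Z; (1392, 576)%Z; (240, 480)%Z; (0, 480)%Z; (-336, 672)%Z; (-96, 1152)%Z; (528, 864)%Z];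
  [:: (214188, 261244)%Z; (85578, 108114)%Z; (-7094, 133338)%Z; (34442, 113786)%Z; (34590, 29870)%Z; (18048, 10984)%Z; (57572, 7036)%Z; (64302, -31779)%Z; (28017, -30924)%Z; (20786, 258)%Z; (35498, 4034)%Z; (26036, -9837)%Z; (4415, -6110)%Z; (22032, 1776)%Z; (2536, -5272)%Z; (-8800, -1120)%Z; (-5460, 3940)%Z; (352, -1104)%Z; (-2860, -7220)%Z; (-5888, -3904)%Z; (-19454, -19302)%Z; (-5934, -8022)%Z; (682, -7014)%Z; (1810, -6670)%Z; (1914, -6478)%Z; (1386, -6702)%Z; (-422, -6486)%Z; (-2510, -4270)%Z; (-270, -2950)%Z; (-1038, -21094)%Z; (3918, 7314)%Z; (654, 2322)%Z; (-1326, 1902)%Z; (-1422, 2094)%Z; (-1458, 2226)%Z; (-894, 2718)%Z; (450, 1950)%Z; (78, 114)%Z; (1230, 4050)%Z; (-408, -984)%Z; (120, -360)%Z; (240, -240)%Z; (504, -168)%Z; (624, -528)%Z; (168, -696)%Z];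
  [:: (-346840, -2625536)%Z; (-121404, -1019504)%Z; (606444, -787784)%Z; (260716, -843592)%Z; (-87884, -321368)%Z; (-95000, -166936)%Z; (-390424, -302872)%Z; (-561001, -48481)%Z; (-276963, 92415)%Z; (-96516, -103224)%Z; (-194292, -185360)%Z; (-194293, -40233)%Z; (-41871, 26983)%Z; (-112608, -66240)%Z; (-29632, 53344)%Z; (49616, 56512)%Z; (31712, 104)%Z; (-38128, 16080)%Z; (-35104, 77192)%Z; (13168, 61792)%Z; (44484, 196016)%Z; (-2700, 52928)%Z; (-29236, 36584)%Z; (-25060, 35880)%Z; (-18636, 33840)%Z; (-13548, 33392)%Z; (-5044, 35336)%Z; (6812, 31464)%Z; (-12588, 24864)%Z; (-63292, 141072)%Z; (6360, -58356)%Z; (6264, -8340)%Z; (12936, -8556)%Z; (8328, -10860)%Z; (6264, -8916)%Z; (4680, -10572)%Z; (-1560, -8940)%Z; (792, -2292)%Z; (1944, -32052)%Z; (-2640, 5856)%Z; (-1680, 0)%Z; (-1344, 1632)%Z; (-720, 192)%Z; (-2400, 192)%Z; (-1776, 2112)%Z];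
  [:: (-359816, 805424)%Z; (-147588, 295000)%Z; (-310460, 115232)%Z; (-211196, 192192)%Z; (-26052, 100896)%Z; (-2296, 77864)%Z; (59864, 175992)%Z; (158323, 117255)%Z; (93597, 11923)%Z; (-780, 37552)%Z; (16228, 82872)%Z; (47119, 40055)%Z; (16697, -5101)%Z; (28192, 23808)%Z; (25312, -18304)%Z; (528, -25504)%Z; (-3504, 792)%Z; (23632, 10128)%Z; (34288, -11944)%Z; (12720, -19456)%Z; (18300, -62328)%Z; (3948, -7272)%Z; (12228, -5760)%Z; (10740, -11040)%Z; (6924, -13464)%Z; (3564, -14040)%Z; (1092, -13920)%Z; (-204, -11808)%Z; (9996, -5448)%Z; (38780, -35736)%Z; (-10416, 14244)%Z; (-336, -924)%Z; (-5040, 1788)%Z; (-3312, 5532)%Z; (-912, 5700)%Z; (528, 5628)%Z; (2160, 3900)%Z; (-1200, 516)%Z; (-4848, 11364)%Z; (1296, -384)%Z; (-240, 480)%Z; (768, -864)%Z; (-48, -1248)%Z; (-288, -768)%Z; (-144, -672)%Z];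
  [:: (-2, 0)%Z; (4, -4)%Z; (0, -8)%Z; (-4, -4)%Z; (-2, 0)%Z; (0, 0)%Z; (1, 0)%Z; (1, -1)%Z; (0, -1)%Z; (0, 0)%Z; (1, 0)%Z; (1, -1)%Z; (0, -1)%Z; (0, 0)%Z; (0, 0)%Z; (0, 0)%Z; (0, 0)%Z; (0, 0)%Z; (0, 0)%Z; (0, 0)%Z; (0, 0)%Z; (0, 0)%Z; (0, 0)%Z; (0, 0)%Z; (0, 0)%Z; (0, 0)%Z; (0, 0)%Z; (0, 0)%Z; (0, 0)%Z; (0, 0)%Z; (0, 0)%Z; (0, 0)%Z; (0, 0)%Z; (0, 0)%Z; (0, 0)%Z; (0, 0)%Z; (0, 0)%Z; (0, 0)%Z; (0, 0)%Z; (0, 0)%Z; (0, 0)%Z; (0, 0)%Z; (0, 0)%Z; (0, 0)%Z; (0, 0)%Z];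
  [:: (-570120, 612176)%Z; (-226436, 233784)%Z; (-321284, -3256)%Z; (-273356, 99152)%Z; (-68076, 88488)%Z; (-23880, 54936)%Z; (8304, 154192)%Z; (102911, 149871)%Z; (81253, 55535)%Z; (-1724, 50624)%Z; (-2468, 89680)%Z; (32123, 58783)%Z; (15921, 5727)%Z; (2048, 46240)%Z; (15632, -3024)%Z; (1624, -24872)%Z; (-8032, -11544)%Z; (8208, 1520)%Z; (21744, -9512)%Z; (10072, -16232)%Z; (47616, -49836)%Z; (16080, -11788)%Z; (15936, 1076)%Z; (15120, 1700)%Z; (13936, 980)%Z; (13488, -412)%Z; (12544, -3916)%Z; (8048, -7644)%Z; (7248, -1724)%Z; (51872, -10172)%Z; (-16960, 9636)%Z; (-4184, 700)%Z; (-4816, -2484)%Z; (-4888, -1580)%Z; (-4544, -1564)%Z; (-5240, -428)%Z; (-3280, 1900)%Z; (-312, 92)%Z; (-9344, 5092)%Z; (2160, -736)%Z; (560, 320)%Z; (704, 288)%Z; (400, 608)%Z; (960, 928)%Z; (1296, 128)%Z];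
  [:: (377728, -424728)%Z; (197760, -132524)%Z; (248224, 44580)%Z; (223624, -24948)%Z; (74352, -50356)%Z; (-37752, -58888)%Z; (-87376, -108768)%Z; (-84935, -85581)%Z; (-20299, -57019)%Z; (23864, -81380)%Z; (6584, -90636)%Z; (-10095, -47913)%Z; (2253, -5639)%Z; (48736, 256)%Z; (19792, 29296)%Z; (3512, 32904)%Z; (-13816, 28528)%Z; (-27184, 34896)%Z; (-21608, 42144)%Z; (-5192, 28360)%Z; (-45876, 14000)%Z; (-33124, -9456)%Z; (-9700, -10336)%Z; (4060, -11840)%Z; (10092, -16448)%Z; (8780, -21168)%Z; (1820, -18784)%Z; (-3236, -5792)%Z; (-2276, 7488)%Z; (-24052, -7520)%Z; (16868, -168)%Z; (9692, 6992)%Z; (-1524, 3000)%Z; (-7436, 5344)%Z; (-8220, 9624)%Z; (-4684, 12224)%Z; (620, 8120)%Z; (-388, -2000)%Z; (1188, 1176)%Z; (-3968, -752)%Z; (-1120, -2160)%Z; (1312, -256)%Z; (3264, -1744)%Z; (2144, -3904)%Z; (-224, -3152)%Z];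
  [:: (-693376, 340968)%Z; (-228432, 81476)%Z; (-201576, -169412)%Z; (-224920, -81780)%Z; (-89176, 13828)%Z; (-23816, 102728)%Z; (-9240, 210520)%Z; (59857, 159519)%Z; (14809, 37453)%Z; (-75496, 32668)%Z; (-59744, 77052)%Z; (-39, 43667)%Z; (5521, -8703)%Z; (-896, -32672)%Z; (31680, -38240)%Z; (28784, -29632)%Z; (28728, -704)%Z; (52464, 13328)%Z; (61624, -5472)%Z; (31888, -17504)%Z; (41704, -2052)%Z; (4248, 26956)%Z; (1472, 8404)%Z; (-5120, -6140)%Z; (-13272, -10964)%Z; (-18264, -8788)%Z; (-15392, -4524)%Z; (-4672, -3644)%Z; (11448, -4084)%Z; (29128, -1764)%Z; (-12236, -6472)%Z; (2948, -10744)%Z; (76, 1032)%Z; (4636, 7512)%Z; (9812, 7064)%Z; (11708, 3416)%Z; (7820, -600)%Z; (-1948, 1064)%Z; (-3084, 5752)%Z; (1376, 3312)%Z; (-1600, 1840)%Z; (-96, -1472)%Z; (-2368, -2896)%Z; (-3968, -1056)%Z; (-2560, 720)%Z];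
  [:: (2, 2)%Z; (-8, 0)%Z; (-8, 8)%Z; (0, 8)%Z; (2, 2)%Z; (0, 0)%Z; (-1, -1)%Z; (-2, 0)%Z; (-1, 1)%Z; (0, 0)%Z; (-1, -1)%Z; (-2, 0)%Z; (-1, 1)%Z; (0, 0)%Z; (0, 0)%Z; (0, 0)%Z; (0, 0)%Z; (0, 0)%Z; (0, 0)%Z; (0, 0)%Z; (0, 0)%Z; (0, 0)%Z; (0, 0)%Z; (0, 0)%Z; (0, 0)%Z; (0, 0)%Z; (0, 0)%Z; (0, 0)%Z; (0, 0)%Z; (-1, 0)%Z; (0, 0)%Z; (0, 0)%Z; (0, 0)%Z; (0, 0)%Z; (0, 0)%Z; (0, 0)%Z; (0, 0)%Z; (0, 0)%Z; (0, 0)%Z; (0, 0)%Z; (0, 0)%Z; (0, 0)%Z; (0, 0)%Z; (0, 0)%Z; (0, 0)%Z];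
  [:: (-393624, 3270192)%Z; (-160268, 1197464)%Z; (-1021604, 709952)%Z; (-618100, 944400)%Z; (1796, 430752)%Z; (66456, 241592)%Z; (383320, 497080)%Z; (675213, 225001)%Z; (373251, -44803)%Z; (92956, 138592)%Z; (192604, 268808)%Z; (235649, 88073)%Z; (60119, -32147)%Z; (126816, 102592)%Z; (57600, -55200)%Z; (-43904, -78608)%Z; (-46288, -536)%Z; (42416, 8752)%Z; (63856, -64888)%Z; (4512, -69296)%Z; (1116, -251888)%Z; (8492, -59616)%Z; (48708, -37624)%Z; (48980, -42680)%Z; (41932, -47056)%Z; (32684, -51312)%Z; (18692, -54936)%Z; (-108, -47096)%Z; (23372, -20896)%Z; (131612, -173616)%Z; (-23744, 71212)%Z; (-4368, 9084)%Z; (-22016, 7508)%Z; (-19536, 15908)%Z; (-15392, 16716)%Z; (-11408, 20804)%Z; (800, 17620)%Z; (-2352, 156)%Z; (-14336, 44908)%Z; (4464, -6272)%Z; (880, -480)%Z; (3456, -2208)%Z; (2928, -2144)%Z; (3808, -2624)%Z; (2320, -4320)%Z];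
  [:: (-41040, -256888)%Z; (-20072, -148892)%Z; (49152, -73892)%Z; (56768, -67556)%Z; (13888, -40924)%Z; (-52120, 19512)%Z; (-75432, 36424)%Z; (-52793, 18557)%Z; (-34269, -24605)%Z; (-46608, -49172)%Z; (-54376, -36900)%Z; (-35529, -14719)%Z; (-7453, -3481)%Z; (24576, -40800)%Z; (25024, -13088)%Z; (15808, 7536)%Z; (11736, 26992)%Z; (21456, 36720)%Z; (28888, 26896)%Z; (18784, 9616)%Z; (-8968, 28548)%Z; (-21720, 22644)%Z; (-9008, 1852)%Z; (-5680, -12820)%Z; (-9768, -19980)%Z; (-15944, -19724)%Z; (-17872, -11652)%Z; (-8944, -148)%Z; (6696, 3572)%Z; (-24456, 996)%Z; (8740, -10288)%Z; (9412, -5520)%Z; (1148, 3792)%Z; (1724, 10000)%Z; (5572, 11952)%Z; (9500, 9424)%Z; (7740, 2480)%Z; (-2524, -496)%Z; (4452, 784)%Z; (-2560, 2288)%Z; (-2080, 240)%Z; (288, -1664)%Z; (-480, -3664)%Z; (-2560, -3424)%Z; (-2848, -1264)%Z];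
  [:: (0, -4)%Z; (8, 8)%Z; (16, 0)%Z; (8, -8)%Z; (0, -4)%Z; (0, 0)%Z; (0, 2)%Z; (2, 2)%Z; (2, 0)%Z; (0, 0)%Z; (0, 2)%Z; (2, 2)%Z; (2, 0)%Z; (0, 0)%Z; (0, 0)%Z; (0, 0)%Z; (0, 0)%Z; (0, 0)%Z; (0, 0)%Z; (0, 0)%Z; (0, 0)%Z; (0, 0)%Z; (0, 0)%Z; (0, 0)%Z; (0, 0)%Z; (0, 0)%Z; (0, 0)%Z; (0, 0)%Z; (0, 0)%Z; (2, 2)%Z; (0, 0)%Z; (0, 0)%Z; (0, 0)%Z; (0, 0)%Z; (0, 0)%Z; (0, 0)%Z; (0, 0)%Z; (0, 0)%Z; (-1, 0)%Z; (0, 0)%Z; (0, 0)%Z; (0, 0)%Z; (0, 0)%Z; (0, 0)%Z; (0, 0)%Z];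
  [:: (256936, 178432)%Z; (91972, 66768)%Z; (6844, 120264)%Z; (48076, 100184)%Z; (36612, 21880)%Z; (27336, 1864)%Z; (58936, -17416)%Z; (46599, -51097)%Z; (11509, -33969)%Z; (17052, -2072)%Z; (31836, -6848)%Z; (15675, -18209)%Z; (-2327, -6441)%Z; (13664, -2560)%Z; (-2720, -5504)%Z; (-9280, 1200)%Z; (-2688, 4552)%Z; (2512, -2800)%Z; (-2272, -8312)%Z; (-5344, -3760)%Z; (-23396, -20088)%Z; (-4340, -4744)%Z; (-588, -6704)%Z; (-1340, -6928)%Z; (-2548, -6328)%Z; (-3796, -5208)%Z; (-4684, -3728)%Z; (-4476, -1744)%Z; (-724, -2824)%Z; (-10788, -20024)%Z; (3864, 9196)%Z; (168, 956)%Z; (-664, 2708)%Z; (632, 2980)%Z; (1272, 2380)%Z; (1912, 1860)%Z; (1928, 468)%Z; (-184, 156)%Z; (3928, 3244)%Z; (368, -1120)%Z; (112, 0)%Z; (64, -544)%Z; (-144, -512)%Z; (-224, -512)%Z; (-432, -384)%Z];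
  [:: (-2376, -2832)%Z; (-868, -1288)%Z; (76, -1288)%Z; (-220, -1040)%Z; (-252, -296)%Z; (-472, -120)%Z; (-960, 48)%Z; (-793, 431)%Z; (-283, 263)%Z; (-268, -144)%Z; (-468, -96)%Z; (-301, 143)%Z; (-15, 103)%Z; (0, 0)%Z; (112, 112)%Z; (152, 72)%Z; (64, 40)%Z; (0, 112)%Z; (48, 152)%Z; (72, 72)%Z; (-24, 292)%Z; (-24, 52)%Z; (-40, 36)%Z; (-24, 36)%Z; (-8, 36)%Z; (8, 36)%Z; (24, 36)%Z; (40, 36)%Z; (24, 52)%Z; (24, 228)%Z; (64, -76)%Z; (8, -4)%Z; (16, -4)%Z; (8, -12)%Z; (0, -12)%Z; (-8, -12)%Z; (-16, -4)%Z; (-8, -4)%Z; (-32, -44)%Z; (-16, 0)%Z; (0, 0)%Z; (0, 0)%Z; (0, 0)%Z; (0, 0)%Z; (0, 0)%Z];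
  [:: (96048, -51256)%Z; (31728, -16436)%Z; (34336, 22428)%Z; (38312, 6276)%Z; (13600, -6140)%Z; (5448, -9816)%Z; (3352, -24184)%Z; (-9193, -24059)%Z; (-7893, -8749)%Z; (4136, -5772)%Z; (4288, -11916)%Z; (-3089, -8287)%Z; (-2605, -65)%Z; (1472, -2304)%Z; (-2784, 1728)%Z; (-2040, 4120)%Z; (-200, 2000)%Z; (-1808, -864)%Z; (-3880, -80)%Z; (-2328, 1416)%Z; (-11164, 2648)%Z; (-1404, -792)%Z; (-1308, -1704)%Z; (-1420, -1160)%Z; (-1516, -568)%Z; (-1564, 88)%Z; (-1452, 664)%Z; (-1020, 1000)%Z; (-940, -120)%Z; (-8108, -264)%Z; (3548, 1144)%Z; (-396, 432)%Z; (84, 952)%Z; (508, 544)%Z; (572, 216)%Z; (636, -112)%Z; (340, -360)%Z; (-12, 64)%Z; (1660, -680)%Z; (-208, -464)%Z; (240, 0)%Z; (80, -160)%Z; (-16, -128)%Z; (-96, -128)%Z; (-192, -16)%Z]].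

Lemma chkP1 : checkP PZ1. Proof. vm_compute; reflexivity. Qed.
Lemma chkL1 : checkL LZ1 PZ1. Proof. vm_compute; reflexivity. Qed.
Lemma chkP2 : checkP PZ2. Proof. vm_compute; reflexivity. Qed.
Lemma chkL2 : checkL LZ2 PZ2. Proof. vm_compute; reflexivity. Qed.
Lemma chkPerm : perm_eq (map (multZ LZ1) PZ1) (map (multZ LZ2) PZ2).
Proof. vm_compute; reflexivity. Qed.
Lemma chkW1 : checkW (QsZ LZ1 3) Outs1 W1. Proof. vm_compute; reflexivity. Qed.
Lemma chkW2 : checkW (QsZ LZ2 4) Outs2 W2. Proof. vm_compute; reflexivity. Qed.

Lemma phiZ0 e : phi e (0, 0)%Z = 0. Proof. exact: phi0. Qed.
Lemma phiZ1 e : phi e (1, 0)%Z = 1. Proof. exact: phi1. Qed.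
Lemma phiZm1 e : phi e (-1, 0)%Z = -1. Proof. by rewrite /phi /= mul0r addr0 /Zr /=. Qed.
Lemma phiZ2 e : phi e (2, 0)%Z = 2. Proof. by rewrite /phi /= mul0r addr0 /Zr /=. Qed.
Lemma phiZm2 e : phi e (-2, 0)%Z = -2. Proof. by rewrite /phi /= mul0r addr0 /Zr /=. Qed.
Lemma phiZe e : phi e (0, 1)%Z = e. Proof. by rewrite /phi /= Zr0 add0r Zr1 mul1r. Qed.
Lemma phiZme e : phi e (0, -1)%Z = - e. Proof. by rewrite /phi /= Zr0 add0r /Zr /= mulN1r. Qed.

Lemma L9E e : L9 = map (phi3 e) LZ1.
Proof. by rewrite /L9 /LZ1 /= /phi3 /= !(phiZ0, phiZ1, phiZm1, phiZ2, phiZm2). Qed.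
Lemma L9'E e : L9' e = map (phi3 e) LZ2.
Proof. by rewrite /L9' /LZ2 /= /phi3 /= !(phiZ0, phiZ1, phiZm1, phiZ2, phiZm2, phiZe, phiZme). Qed.

Lemma syz1 e (he : e ^+ 2 + 1 = 0) : jac_syzygy (arr_poly (map (phi3 e) LZ1)) 4.
Proof.
apply: (yes_syz he (A := SyzA1) (B := SyzB1) (C := SyzC1)); vm_compute; reflexivity.
Qed.
Lemma syz2 e (he : e ^+ 2 + 1 = 0) : jac_syzygy (arr_poly (map (phi3 e) LZ2)) 5.
Proof.
apply: (yes_syz he (A := SyzA2) (B := SyzB2) (C := SyzC2)); vm_compute; reflexivity.
Qed.

Theorem mainTheorem6 (e : algC) (he : e ^+ 2 + 1 = 0) :
  weak_Ziegler_pair L9 (L9' e).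
Proof.
rewrite (L9E e) (L9'E e); split.
- exact: (reduced_lemma he chkL1).
- exact: (reduced_lemma he chkL2).
- split; first by [].
  move=> i hi n.
  have c1 := card_lemma he chkP1 chkL1 hi.
  have c2 := card_lemma he chkP2 chkL2 hi.
  have ceq : count (fun p => multZ LZ1 p == i) PZ1 = count (fun p => multZ LZ2 p == i) PZ2.
    by have := permP chkPerm (pred1 i); rewrite !count_map.
  rewrite ceq in c1.
  by split => h; [rewrite (card_uniq h c1) | rewrite (card_uniq h c2)].
- exists 4%nat, 5%nat; split => //.
  + apply: mdr_of; first exact: syz1.
    exact: no_syz he _ _ _ _ chkW1.
  + apply: mdr_of; first exact: syz2.
    exact: no_syz he _ _ _ _ chkW2.
Qed.
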